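(* Let $1\le p<\infty$ and let $X$ be a maximal sequence space. The following are equivalent: (1) $X$ is $p$-convex. (2) There exist a norm $\|\cdot\|_p$ on the sequence space $X_p:=\{\tau\in\ell_\infty:\ |\tau|^{1/p}\in X\}$ and a constant $c>0$ such that for all $\sigma\in X$ \[\frac1c\|\sigma\|_X\le \big\|\,|\sigma|^p\big\|_p^{1/p}\le\|\sigma\|_X .\] (3) There exists a maximal sequence space $Y$ such that $X={\rm ID}\mathcal L(Y,\ell_p)$ as sets, with equivalent norms. Moreover, in this case one can choose $Y={\rm ID}\mathcal L(X,\ell_p)$, and then for every $\sigma\in X$ \[\frac{1}{M^p(X)}\|\sigma\|_X\le \|D_\sigma:Y\to\ell_p\|\le\|\sigma\|_X .\]
   Context: All sequences are scalar sequences indexed by $\mathbb N$; $(e_k)$ denotes the unit vectors, and for a sequence $\sigma$ and $n\in\mathbb N$, $P_n\sigma:=\sum_{k=1}^n\sigma_ke_k$. A maximal sequence space is a Banach space $(X,\|\cdot\|_X)$ of scalar sequences such that: (i) $\ell_1\subset X\subset\ell_\infty$ and $\|e_k\|_X=1$ for all $k$; (ii) if $\sigma\in X$ and $\alpha\in\ell_\infty$ then the pointwise product $\alpha\sigma\in X$ with $\|\alpha\sigma\|_X\le\|\alpha\|_\infty\|\sigma\|_X$; (iii) $\sigma\in X$ if and only if $\sup_n\|P_n\sigma\|_X<\infty$, and in this case $\|\sigma\|_X=\sup_n\|P_n\sigma\|_X$. For $1\le p<\infty$, a maximal sequence space $X$ is $p$-convex if there is $c>0$ such that for all $n$ and $x_1,\dots,x_n\in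 X$, $\|(\sum_{k=1}^n|x_k|^p)^{1/p}\|_X\le c(\sum_{k=1}^n\|x_k\|_X^p)^{1/p}$ (pointwise operations); the least such $c$ is denoted $M^p(X)$. For maximal sequence spaces $X,Y$, ${\rm ID}\mathcal L(X,Y)$ denotes the space of sequences $\sigma$ such that the diagonal operator $D_\sigma(\tau)=(\sigma_k\tau_k)_k$ maps $X$ boundedly into $Y$, normed by the operator norm $\|D_\sigma:X\to Y\|$. $|\sigma|^r$ denotes the sequence $(|\sigma_k|^r)_k$. *)

(* Defs.v *)
From mathcomp Require Import all_boot all_order all_algebra.
From mathcomp Require Import all_classical all_reals all_analysis.
Set Implicit Arguments. Unset Strict Implicit. Unset Printing Implicit Defensive.
Import Order.TTheory GRing.Theory Num.Theory.
Local Open Scope classical_set_scope.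
Local Open Scope ring_scope.

(* Sequences are functions nat -> R; index 0 plays the role of the first index. *)

Definition bounded_seq {R : realType} (a : nat -> R) : Prop :=
  exists M : R, forall k, `|a k| <= M.

Definition ell1 {R : realType} (a : nat -> R) : Prop :=
  exists M : R, forall n, \sum_(k < n) `|a k| <= M.

Definition unit_vec {R : realType} (k : nat) : nat -> R :=
  fun j => if j == k then 1 else 0.

Definition proj_seq {R : realType} (n : nat) (s : nat -> R) : nat -> R :=
  fun k => if (k < n)%N then s k else 0.

Definition is_normed_seq_space {R : realType} (X : set (nat -> R))
    (nrm : (nat -> R) -> R) : Prop :=
  X (fun _ => 0) /\
  (forall x y, X x -> X y -> X (fun k => x k + y k)) /\
  (forall (a : R) x, X x -> X (fun k => a * x k)) /\
  (forall x, X x -> 0 <= nrm x) /\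
  (forall x, X x -> nrm x = 0 -> x = (fun _ => 0)) /\
  (forall (a : R) x, X x -> nrm (fun k => a * x k) = `|a| * nrm x) /\
  (forall x y, X x -> X y -> nrm (fun k => x k + y k) <= nrm x + nrm y).

Definition is_complete_seq_space {R : realType} (X : set (nat -> R))
    (nrm : (nat -> R) -> R) : Prop :=
  forall u : nat -> nat -> R, (forall n, X (u n)) ->
  (forall e : R, 0 < e -> exists N, forall m n, (N <= m)%N -> (N <= n)%N ->
       nrm (fun k => u m k - u n k) < e) ->
  exists x, X x /\ (forall e : R, 0 < e -> exists N, forall n, (N <= n)%N ->
       nrm (fun k => u n k - x k) < e).

Definition maximal_seq_space {R : realType} (X : set (nat -> R))
    (nrm : (nat -> R) -> R) : Prop :=
  is_normed_seq_space X nrm /\ is_complete_seq_space X nrm /\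
  (forall s, ell1 s -> X s) /\ (forall s, X s -> bounded_seq s) /\
  (forall k, nrm (unit_vec k) = 1) /\
  (* (ii): for every bound M of |alpha| (so in particular M = ||alpha||_oo) *)
  (forall (a s : nat -> R) (M : R), X s -> (forall k, `|a k| <= M) ->
      X (fun k => a k * s k) /\ nrm (fun k => a k * s k) <= M * nrm s) /\
  (forall s, X s <-> exists M : R, forall n, nrm (proj_seq n s) <= M) /\
  (forall s, X s ->
     (forall n, nrm (proj_seq n s) <= nrm s) /\
     (forall M : R, (forall n, nrm (proj_seq n s) <= M) -> nrm s <= M)).

Definition pconvex_const {R : realType} (X : set (nat -> R))
    (nrm : (nat -> R) -> R) (p c : R) : Prop :=
  0 < c /\
  forall (n : nat) (xs : nat -> nat -> R), (forall i, (i < n)%N -> X (xs i)) ->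
    nrm (fun j => (\sum_(i < n) `|xs i j| `^ p) `^ p^-1)
      <= c * (\sum_(i < n) nrm (xs i) `^ p) `^ p^-1.

Definition pconvex {R : realType} (X : set (nat -> R))
    (nrm : (nat -> R) -> R) (p : R) : Prop :=
  exists c, pconvex_const X nrm p c.

Definition Mp {R : realType} (X : set (nat -> R))
    (nrm : (nat -> R) -> R) (p : R) : R :=
  inf [set c | pconvex_const X nrm p c].

Definition Xpow {R : realType} (X : set (nat -> R)) (p : R) : set (nat -> R) :=
  [set t | bounded_seq t /\ X (fun k => `|t k| `^ p^-1)].

Definition ellp {R : realType} (p : R) (x : nat -> R) : Prop :=
  exists M : R, forall n, \sum_(k < n) `|x k| `^ p <= M.

Definition lp_norm {R : realType} (p : R) (x : nat -> R) : R :=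
  (sup [set (\sum_(k < n) `|x k| `^ p) | n in [set: nat]]) `^ p^-1.

Definition IDL {R : realType} (Y : set (nat -> R)) (nY : (nat -> R) -> R)
    (p : R) : set (nat -> R) :=
  [set s | (forall t, Y t -> ellp p (fun k => s k * t k)) /\
           exists C : R, forall t, Y t ->
             lp_norm p (fun k => s k * t k) <= C * nY t].

Definition opnorm {R : realType} (Y : set (nat -> R)) (nY : (nat -> R) -> R)
    (p : R) (s : nat -> R) : R :=
  sup [set lp_norm p (fun k => s k * t k) | t in [set t | Y t /\ nY t <= 1]].

(* Main.v *)
Require Import Defs.
From mathcomp Require Import all_boot all_order all_algebra.
From mathcomp Require Import all_classical all_reals all_analysis.
Import Order.TTheory GRing.Theory Num.Theory.
Local Open Scope classical_set_scope.
Local Open Scope ring_scope.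
From mathcomp Require Import ring lra.

Module Prop11Helpers.
Import numFieldNormedType.Exports.
Set Implicit Arguments. Unset Strict Implicit. Unset Printing Implicit Defensive.
Local Open Scope classical_set_scope.
Local Open Scope ring_scope.

Lemma invr_gt0_lt (R : realType) (x : R) : 0 < x -> 0 < x^-1.
Proof. by rewrite invr_gt0. Qed.
Lemma powRK (R : realType) (p a : R) : p != 0 -> 0 <= a -> (a `^ p) `^ p^-1 = a.
Proof. by move=> p0 a0; rewrite -powRrM mulfV // powRr1. Qed.

Lemma powRKV (R : realType) (p a : R) : p != 0 -> 0 <= a -> (a `^ p^-1) `^ p = a.
Proof. by move=> p0 a0; rewrite -powRrM mulVf // powRr1. Qed.

Lemma pow_le (R : realType) (p a b : R) : 0 <= p -> 0 <= a -> a <= b -> a `^ p <= b `^ p.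
Proof. move=> p0 a0 ab; apply: ge0_ler_powR => //; rewrite nnegrE //; exact: le_trans ab. Qed.

Lemma pow_le_inv (R : realType) (p a b : R) : 0 < p -> 0 <= a -> 0 <= b ->
  a `^ p <= b `^ p -> a <= b.
Proof.
move=> p0 a0 b0 h.
rewrite -(@powRK _ p a (lt0r_neq0 p0) a0) -(@powRK _ p b (lt0r_neq0 p0) b0).
apply: pow_le => //; [by rewrite invr_ge0 ltW | exact: powR_ge0].
Qed.

Lemma pow_lt_le (R : realType) (p a b : R) : 0 < p -> 0 <= a -> 0 <= b ->
  a `^ p^-1 <= b -> a <= b `^ p.
Proof.
move=> p0 a0 b0 h. apply: (@pow_le_inv _ p^-1) => //; first by rewrite invr_gt0.
  exact: powR_ge0.
by rewrite powRK ?gt_eqF.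
Qed.

Lemma pow_le_rt (R : realType) (p a b : R) : 0 < p -> 0 <= a -> 0 <= b ->
  a <= b `^ p -> a `^ p^-1 <= b.
Proof.
move=> p0 a0 b0 h. rewrite -(@powRK _ p b) ?gt_eqF //.
apply: pow_le => //; by rewrite invr_ge0 ltW.
Qed.

Lemma pow0 (R : realType) (p : R) : 0 < p -> 0 `^ p = 0 :> R.
Proof. by move=> p0; rewrite powR0 // gt_eqF. Qed.

Lemma powR_le_self (R : realType) (p x : R) : 1 <= p -> 0 <= x -> x <= 1 -> x `^ p <= x.
Proof.
move=> p1 x0 x1. have [->|xn0] := eqVneq x 0; first by rewrite pow0 // (lt_le_trans _ p1).
by apply: ge1r_powR => //; rewrite lt_neqAle eq_sym xn0 x0.
Qed.

Lemma powR_supadd_aux (R : realType) (p s x y : R) : 1 <= p -> 0 < s ->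
  0 <= x -> 0 <= y -> x + y = 1 -> (s * x) `^ p + (s * y) `^ p <= s `^ p.
Proof.
move=> p1 s0 x0 y0 xy.
rewrite !powRM ?(ltW s0) //.
have hx := powR_le_self p1 x0 (_ : x <= 1).
have hy := powR_le_self p1 y0 (_ : y <= 1).
have sp : 0 <= s `^ p by apply: powR_ge0.
apply: (@le_trans _ _ (s `^ p * x + s `^ p * y)).
  by apply: lerD; apply: ler_wpM2l => //; [apply: hx | apply: hy]; lra.
by rewrite -mulrDr xy mulr1.
Qed.

Lemma powR_supadd (R : realType) (p a b : R) : 1 <= p -> 0 <= a -> 0 <= b ->
  a `^ p + b `^ p <= (a + b) `^ p.
Proof.
move=> p1 a0 b0. have p0 : 0 < p by apply: lt_le_trans p1.
have [ab0|abp] : a + b = 0 \/ 0 < a + b.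
  by case: (eqVneq (a+b) 0) => [->|h]; [left|right; rewrite lt_neqAle eq_sym h addr_ge0].
  have -> : a = 0 by lra. have -> : b = 0 by lra. by rewrite addr0 !pow0 // addr0.
have sn : a + b != 0 by rewrite gt_eqF.
have ea : a = (a + b) * (a / (a + b)) by rewrite mulrC divfK.
have eb : b = (a + b) * (b / (a + b)) by rewrite mulrC divfK.
have := @powR_supadd_aux _ p (a + b) (a / (a + b)) (b / (a + b)) p1 abp.
rewrite -ea -eb; apply.
  exact: divr_ge0 (ltW abp). exact: divr_ge0 (ltW abp).
by rewrite -mulrDl divff.
Qed.

Lemma sum_powR_le (R : realType) (p : R) (n : nat) (a : nat -> R) : 1 <= p ->
  (forall k, 0 <= a k) -> \sum_(k < n) a k `^ p <= (\sum_(k < n) a k) `^ p.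
Proof.
move=> p1 a0; elim: n => [|n IH]; first by rewrite !big_ord0 pow0 // (lt_le_trans _ p1).
rewrite !big_ord_recr /=. apply: le_trans (powR_supadd p1 _ _) => //.
  by rewrite lerD2r. by apply: sumr_ge0.
Qed.

Lemma sum_root_le (R : realType) (p : R) (n : nat) (a : nat -> R) : 1 <= p ->
  (forall k, 0 <= a k) -> (\sum_(k < n) a k `^ p) `^ p^-1 <= \sum_(k < n) a k.
Proof.
move=> p1 a0. have p0 : 0 < p by apply: lt_le_trans p1.
apply: pow_le_rt => //; [apply: sumr_ge0 => i _; exact: powR_ge0 | apply: sumr_ge0 => i _; exact: a0 | exact: sum_powR_le].
Qed.

Lemma powR_subadd (R : realType) (p a b : R) : 1 <= p -> 0 <= a -> 0 <= b ->
  (a + b) `^ p^-1 <= a `^ p^-1 + b `^ p^-1.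
Proof.
move=> p1 a0 b0. have p0 : 0 < p by apply: lt_le_trans p1.
apply: pow_le_rt => //. by rewrite addr_ge0 ?powR_ge0.
by rewrite addr_ge0 ?powR_ge0.
have := powR_supadd p1 (powR_ge0 a p^-1) (powR_ge0 b p^-1).
by rewrite !powRKV ?gt_eqF.
Qed.

Lemma cvx_pow (R : realType) (p l x y : R) : 1 <= p -> 0 <= l -> l <= 1 -> 0 <= x -> 0 <= y ->
  (l * x + (1 - l) * y) `^ p <= l * x `^ p + (1 - l) * y `^ p.
Proof.
move=> p1 l0 l1 x0 y0.
have := @convex_powR R p p1 (Itv01 l0 l1) x y.
rewrite !inE /= !in_itv /= !andbT => /(_ x0 y0).
by rewrite !convRE /=.
Qed.

Lemma sum_eq0_each (R : realType) (n : nat) (f : nat -> R) :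
  (forall k, 0 <= f k) -> \sum_(k < n) f k = 0 -> forall k, (k < n)%N -> f k = 0.
Proof.
move=> f0 /eqP; rewrite psumr_eq0 // => /allP h k kn.
by have /implyP := h (Ordinal kn) (mem_index_enum _) => /(_ isT) /eqP.
Qed.

Lemma inv_pow_mul (R : realType) (p A : R) : 0 < A -> A `^ p * A^-1 `^ p = 1.
Proof. by move=> A0; rewrite -powRM ?invr_ge0 ?(ltW A0) // divff ?gt_eqF // powR1. Qed.

Lemma minkowski_fin (R : realType) (p : R) (n : nat) (a b : nat -> R) : 1 <= p ->
  (\sum_(k < n) `|a k + b k| `^ p) `^ p^-1 <=
  (\sum_(k < n) `|a k| `^ p) `^ p^-1 + (\sum_(k < n) `|b k| `^ p) `^ p^-1.
Proof.
move=> p1. have p0 : 0 < p by apply: lt_le_trans p1.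
have pn0 : p != 0 by rewrite gt_eqF.
set Sa := \sum_(k < n) `|a k| `^ p. set Sb := \sum_(k < n) `|b k| `^ p.
have Sa0 : 0 <= Sa by apply: sumr_ge0 => i _; exact: powR_ge0.
have Sb0 : 0 <= Sb by apply: sumr_ge0 => i _; exact: powR_ge0.
set A := Sa `^ p^-1. set B := Sb `^ p^-1.
have A0 : 0 <= A by apply: powR_ge0.
have B0 : 0 <= B by apply: powR_ge0.
have eSa : Sa = A `^ p by rewrite /A powRKV.
have eSb : Sb = B `^ p by rewrite /B powRKV.
have [Ae|Ap] : A = 0 \/ 0 < A by case: (eqVneq A 0) => [->|h]; [left|right; rewrite lt_neqAle eq_sym h A0].
  have Sae : Sa = 0 by rewrite eSa Ae pow0.
  have az : forall k, (k < n)%N -> a k = 0.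
    move=> k kn; have := sum_eq0_each (fun k => powR_ge0 `|a k| p) Sae kn.
    by move/powR_eq0_eq0/normr0_eq0.
  rewrite Ae add0r /B /Sb; apply: pow_le => //; first by rewrite invr_ge0 ltW.
    by apply: sumr_ge0 => i _; exact: powR_ge0.
  rewrite le_eqVlt; apply/orP; left; apply/eqP; apply: eq_bigr => i _; by rewrite az ?ltn_ord // add0r.
have [Be|Bp] : B = 0 \/ 0 < B by case: (eqVneq B 0) => [->|h]; [left|right; rewrite lt_neqAle eq_sym h B0].
  have Sbe : Sb = 0 by rewrite eSb Be pow0.
  have bz : forall k, (k < n)%N -> b k = 0.
    move=> k kn; have := sum_eq0_each (fun k => powR_ge0 `|b k| p) Sbe kn.
    by move/powR_eq0_eq0/normr0_eq0.
  rewrite Be addr0 /A /Sa; apply: pow_le => //; first by rewrite invr_ge0 ltW.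
    by apply: sumr_ge0 => i _; exact: powR_ge0.
  rewrite le_eqVlt; apply/orP; left; apply/eqP; apply: eq_bigr => i _; by rewrite bz ?ltn_ord // addr0.
clearbody A B.
have ABp := addr_gt0 Ap Bp.
apply: pow_le_rt => //; first by apply: sumr_ge0 => i _; exact: powR_ge0.
  exact: ltW.
set l := A / (A + B).
have l0 : 0 <= l := divr_ge0 A0 (ltW ABp).
have l1 : l <= 1 by rewrite /l ler_pdivrMr ?ABp // mul1r lerDl; exact: B0.
have el : 1 - l = B / (A + B).
  by rewrite /l; field; exact: lt0r_neq0 ABp.
have l1' : 0 <= 1 - l by rewrite subr_ge0.
have el' : l = A / (A + B) by [].
clearbody l.
have xa : forall k, 0 <= `|a k| / A := fun k => divr_ge0 (normr_ge0 _) A0.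
have yb : forall k, 0 <= `|b k| / B := fun k => divr_ge0 (normr_ge0 _) B0.
apply: (@le_trans _ _ (\sum_(k < n) (A + B) `^ p *
    (l * (`|a k| / A) `^ p + (1 - l) * (`|b k| / B) `^ p))).
  apply: ler_sum => k _.
  have inner : 0 <= l * (`|a k| / A) + (1 - l) * (`|b k| / B) :=
    addr_ge0 (mulr_ge0 l0 (xa k)) (mulr_ge0 l1' (yb k)).
  apply: (@le_trans _ _ ((A + B) `^ p * (l * (`|a k| / A) + (1 - l) * (`|b k| / B)) `^ p)).
    rewrite -(@powRM _ (A + B) _ p (ltW ABp) inner).
    apply: pow_le; [exact: ltW | exact: normr_ge0 |].
    have -> : (A + B) * (l * (`|a k| / A) + (1 - l) * (`|b k| / B)) = `|a k| + `|b k|.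
      rewrite el el'. field. by rewrite !lt0r_neq0.
    exact: ler_normD.
  apply: ler_wpM2l; first exact: powR_ge0.
  exact: cvx_pow.
rewrite -mulr_sumr big_split /= -!mulr_sumr.
have ea : \sum_(i < n) (`|a i| / A) `^ p = 1.
  under eq_bigr => i _ do rewrite (@powRM _ _ _ p (normr_ge0 _) (ltW (invr_gt0_lt Ap))).
  by rewrite -mulr_suml -/Sa eSa inv_pow_mul.
have eb : \sum_(i < n) (`|b i| / B) `^ p = 1.
  under eq_bigr => i _ do rewrite (@powRM _ _ _ p (normr_ge0 _) (ltW (invr_gt0_lt Bp))).
  by rewrite -mulr_suml -/Sb eSb inv_pow_mul.
by rewrite ea eb !mulr1 subrKC mulr1.
Qed.


Lemma ms_zero (R : realType) (X : set (nat -> R)) nrm : maximal_seq_space X nrm -> X (fun _ => 0).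
Proof. by case=> [[H _] _]. Qed.
Lemma ms_add (R : realType) (X : set (nat -> R)) nrm : maximal_seq_space X nrm ->
  forall x y, X x -> X y -> X (fun k => x k + y k).
Proof. by case=> [[_ [H _]] _]. Qed.
Lemma ms_scal (R : realType) (X : set (nat -> R)) nrm : maximal_seq_space X nrm ->
  forall (a : R) x, X x -> X (fun k => a * x k).
Proof. by case=> [[_ [_ [H _]]] _]. Qed.
Lemma ms_ge0 (R : realType) (X : set (nat -> R)) nrm : maximal_seq_space X nrm ->
  forall x, X x -> 0 <= nrm x.
Proof. by case=> [[_ [_ [_ [H _]]]] _]. Qed.
Lemma ms_eq0 (R : realType) (X : set (nat -> R)) nrm : maximal_seq_space X nrm ->
  forall x, X x -> nrm x = 0 -> x = (fun _ => 0).
Proof. by case=> [[_ [_ [_ [_ [H _]]]]] _]. Qed.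
Lemma ms_Z (R : realType) (X : set (nat -> R)) nrm : maximal_seq_space X nrm ->
  forall (a : R) x, X x -> nrm (fun k => a * x k) = `|a| * nrm x.
Proof. by case=> [[_ [_ [_ [_ [_ [H _]]]]]] _]. Qed.
Lemma ms_tri (R : realType) (X : set (nat -> R)) nrm : maximal_seq_space X nrm ->
  forall x y, X x -> X y -> nrm (fun k => x k + y k) <= nrm x + nrm y.
Proof. by case=> [[_ [_ [_ [_ [_ [_ H]]]]]] _]. Qed.
Lemma ms_comp (R : realType) (X : set (nat -> R)) nrm : maximal_seq_space X nrm ->
  is_complete_seq_space X nrm.
Proof. by case=> _ [H _]. Qed.
Lemma ms_l1 (R : realType) (X : set (nat -> R)) nrm : maximal_seq_space X nrm ->
  forall s, ell1 s -> X s.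
Proof. by case=> _ [_ [H _]]. Qed.
Lemma ms_bdd (R : realType) (X : set (nat -> R)) nrm : maximal_seq_space X nrm ->
  forall s, X s -> bounded_seq s.
Proof. by case=> _ [_ [_ [H _]]]. Qed.
Lemma ms_unit (R : realType) (X : set (nat -> R)) nrm : maximal_seq_space X nrm ->
  forall k, nrm (unit_vec k) = 1.
Proof. by case=> _ [_ [_ [_ [H _]]]]. Qed.
Lemma ms_mul (R : realType) (X : set (nat -> R)) nrm : maximal_seq_space X nrm ->
  forall (a s : nat -> R) (M : R), X s -> (forall k, `|a k| <= M) ->
      X (fun k => a k * s k) /\ nrm (fun k => a k * s k) <= M * nrm s.
Proof. by case=> _ [_ [_ [_ [_ [H _]]]]]. Qed.
Lemma ms_iii (R : realType) (X : set (nat -> R)) nrm : maximal_seq_space X nrm ->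
  forall s, X s <-> exists M : R, forall n, nrm (proj_seq n s) <= M.
Proof. by case=> _ [_ [_ [_ [_ [_ [H _]]]]]]. Qed.
Lemma ms_iii2 (R : realType) (X : set (nat -> R)) nrm : maximal_seq_space X nrm ->
  forall s, X s ->
     (forall n, nrm (proj_seq n s) <= nrm s) /\
     (forall M : R, (forall n, nrm (proj_seq n s) <= M) -> nrm s <= M).
Proof. by case=> _ [_ [_ [_ [_ [_ [_ H]]]]]]. Qed.

Lemma ms_nrm0 (R : realType) (X : set (nat -> R)) nrm : maximal_seq_space X nrm ->
  nrm (fun _ => 0) = 0.
Proof.
move=> HX. have := ms_Z HX 0 (ms_zero HX).
have -> : (fun k : nat => (0:R) * 0) = fun _ => 0 by apply: funext => k; rewrite mul0r.
by rewrite normr0 mul0r.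
Qed.

Lemma solid (R : realType) (X : set (nat -> R)) nrm : maximal_seq_space X nrm ->
  forall a b, X b -> (forall k, `|a k| <= `|b k|) -> X a /\ nrm a <= nrm b.
Proof.
move=> HX a b Xb ab.
pose al k := if b k == 0 then 0 else a k / b k.
have e : (fun k => al k * b k) = a.
  apply: funext => k; rewrite /al; case: eqP => [bk|bk].
    by have := ab k; rewrite bk normr0 normr_le0 => /eqP ->; rewrite mul0r.
  by rewrite divfK //; apply/eqP.
have := ms_mul HX Xb (_ : forall k, `|al k| <= 1).
rewrite e mul1r; apply.
move=> k; rewrite /al; case: eqP => [_|bk]; first by rewrite normr0.
rewrite normrM normfV ler_pdivrMr ?mul1r ?ab //.
by rewrite normr_gt0; apply/eqP.
Qed.

Lemma ms_sub (R : realType) (X : set (nat -> R)) nrm : maximal_seq_space X nrm ->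
  forall x y, X x -> X y -> X (fun k => x k - y k).
Proof.
move=> HX x y Xx Xy.
have := ms_add HX Xx (ms_scal HX (-1) Xy).
by have -> : (fun k => x k + (-1) * y k) = (fun k => x k - y k)
  by apply: funext => k; rewrite mulN1r.
Qed.

Lemma ms_abs (R : realType) (X : set (nat -> R)) nrm : maximal_seq_space X nrm ->
  forall x, X x -> X (fun k => `|x k|) /\ nrm (fun k => `|x k|) = nrm x.
Proof.
move=> HX x Xx.
have [h1 h2] := solid HX (a := fun k => `|x k|) Xx (fun k => ltac:(by rewrite normr_id)).
split => //; apply/eqP; rewrite eq_le h2 /=.
by have [_ ->] := solid HX (a := x) h1 (fun k => ltac:(by rewrite normr_id)).

Qed.

Lemma sum_fin_le (R : realType) (f : nat -> R) (n m : nat) :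
  (forall k, 0 <= f k) -> (forall k, (n <= k)%N -> f k = 0) ->
  \sum_(k < m) f k <= \sum_(k < n) f k.
Proof.
move=> f0 fz.
rewrite -(big_mkord xpredT f) -(big_mkord xpredT f).
case: (leqP m n) => mn.
  rewrite (big_cat_nat (leq0n m) mn) /= lerDl.
  by apply: sumr_ge0 => i _.
rewrite (big_cat_nat (leq0n n) (ltnW mn)) /=.
have -> : \sum_(n <= i < m) f i = 0.
  by rewrite big_nat_cond big1 // => i /andP [/andP [ni _] _]; apply: fz.
by rewrite addr0.
Qed.

Lemma fin_ell1 (R : realType) (s : nat -> R) (n : nat) :
  (forall k, (n <= k)%N -> s k = 0) -> ell1 s.
Proof.
move=> sz; exists (\sum_(k < n) `|s k|) => m.
by apply: (@sum_fin_le _ (fun k => `|s k|)) => // k nk; rewrite sz // normr0.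
Qed.

Lemma unit_vec0 (R : realType) k j : (k < j)%N -> unit_vec k j = 0 :> R.
Proof. by move=> kj; rewrite /unit_vec; case: eqP => // e; rewrite e ltnn in kj. Qed.

Lemma unit_ell1 (R : realType) k : ell1 (@unit_vec R k).
Proof. by apply: (@fin_ell1 _ _ k.+1) => j kj; rewrite unit_vec0. Qed.

Lemma proj_ell1 (R : realType) n (s : nat -> R) : ell1 (proj_seq n s).
Proof. by apply: (@fin_ell1 _ _ n) => j nj; rewrite /proj_seq ltnNge nj. Qed.

Lemma coord_le (R : realType) (X : set (nat -> R)) nrm : maximal_seq_space X nrm ->
  forall x k, X x -> `|x k| <= nrm x.
Proof.
move=> HX x k Xx.
have hle : forall j, `|@unit_vec R k j| <= 1.
  by move=> j; rewrite /unit_vec; case: eqP; rewrite ?normr1 ?normr0.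
have [_ h] := ms_mul HX Xx hle.
rewrite mul1r in h; apply: le_trans h.
have -> : (fun j => unit_vec k j * x j) = (fun j => x k * unit_vec k j).
  by apply: funext => j; rewrite /unit_vec; case: eqP => [->|_]; rewrite ?mul1r ?mulr1 ?mul0r ?mulr0.
by rewrite (ms_Z HX) ?(ms_unit HX) ?mulr1 //; apply: (ms_l1 HX) (unit_ell1 _ k).
Qed.

Definition psum (R : realType) (p : R) (s t : nat -> R) (n : nat) :=
  \sum_(k < n) `|s k * t k| `^ p.

Lemma psum_ge0 (R : realType) (p : R) s t n : 0 <= @psum R p s t n.
Proof. by apply: sumr_ge0 => i _; apply: powR_ge0. Qed.

Lemma lp_sup_facts (R : realType) (p : R) (x : nat -> R) : ellp p x ->
  has_sup [set (\sum_(k < n) `|x k| `^ p) | n in [set: nat]] /\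
  0 <= sup [set (\sum_(k < n) `|x k| `^ p) | n in [set: nat]].
Proof.
move=> [M hM].
have hs : has_sup [set (\sum_(k < n) `|x k| `^ p) | n in [set: nat]].
  split; first by exists (\sum_(k < 0) `|x k| `^ p); exists 0%N.
  by exists M => _ [n _ <-].
split => //. apply: le_trans (sup_upper_bound hs _); last by exists 0%N.
by rewrite big_ord0.
Qed.

Lemma lp_le_ellp (R : realType) (p : R) (x : nat -> R) n : 0 < p -> ellp p x ->
  \sum_(k < n) `|x k| `^ p <= lp_norm p x `^ p.
Proof.
move=> p0 hx; have [hs s0] := lp_sup_facts hx.
rewrite /lp_norm powRKV ?gt_eqF //.
by apply: sup_upper_bound hs _ _; exists n.
Qed.

Lemma lp_norm_ge0 (R : realType) (p : R) x : 0 <= @lp_norm R p x.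
Proof. exact: powR_ge0. Qed.

Lemma lp_le_of_bound (R : realType) (p : R) (x : nat -> R) (B : R) : 0 < p -> 0 <= B ->
  (forall n, \sum_(k < n) `|x k| `^ p <= B) -> lp_norm p x <= B `^ p^-1.
Proof.
move=> p0 B0 hB.
have [hs s0] := lp_sup_facts (ex_intro _ B hB : ellp p x).
rewrite /lp_norm; apply: pow_le => //; first by rewrite invr_ge0 ltW.
by apply: ge_sup; [exists (\sum_(k < 0) `|x k| `^ p); exists 0%N | move=> _ [n _ <-]].
Qed.

Lemma opnorm_ge (R : realType) (Y : set (nat -> R)) nY (p : R) s t :
  maximal_seq_space Y nY -> IDL Y nY p s -> Y t -> nY t <= 1 ->
  lp_norm p (fun k => s k * t k) <= opnorm Y nY p s.
Proof.
move=> HY [_ [C hC]] Yt t1.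
apply: sup_upper_bound; last by exists t.
split; first by exists (lp_norm p (fun k => s k * t k)); exists t.
exists `|C| => _ [u [Yu u1] <-].
apply: le_trans (hC u Yu) _.
have u0 := ms_ge0 HY Yu.
apply: (@le_trans _ _ (`|C| * nY u)); first by apply: ler_wpM2r => //; apply: ler_norm.
by rewrite -[X in _ <= X]mulr1; apply: ler_wpM2l.
Qed.

Lemma opnorm_le (R : realType) (Y : set (nat -> R)) nY (p : R) s (B : R) :
  maximal_seq_space Y nY ->
  (forall t, Y t -> nY t <= 1 -> lp_norm p (fun k => s k * t k) <= B) ->
  opnorm Y nY p s <= B.
Proof.
move=> HY hB; apply: ge_sup; last by move=> _ [t [Yt t1] <-]; apply: hB.
exists (lp_norm p (fun k => s k * 0)); exists (fun _ => 0) => //.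
by split; [exact: ms_zero HY | rewrite (ms_nrm0 HY)].
Qed.

Lemma opnorm_ge0 (R : realType) (Y : set (nat -> R)) nY (p : R) s :
  maximal_seq_space Y nY -> IDL Y nY p s -> 0 <= opnorm Y nY p s.
Proof.
move=> HY hs; apply: le_trans (opnorm_ge HY hs (ms_zero HY) _); first exact: lp_norm_ge0.
by rewrite (ms_nrm0 HY).
Qed.

Lemma psum_scale_t (R : realType) (p a : R) s t n :
  psum p s (fun k => a * t k) n = `|a| `^ p * psum p s t n.
Proof.
rewrite /psum mulr_sumr; apply: eq_bigr => i _.
by rewrite mulrCA normrM powRM.
Qed.

Lemma psum_scale_s (R : realType) (p a : R) s t n :
  psum p (fun k => a * s k) t n = `|a| `^ p * psum p s t n.
Proof.
rewrite /psum mulr_sumr; apply: eq_bigr => i _.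
by rewrite -mulrA normrM powRM.
Qed.

Lemma scale_bound (R : realType) (Y : set (nat -> R)) nY (p : R) s (B : R) :
  maximal_seq_space Y nY -> 0 < p -> 0 <= B ->
  (forall t, Y t -> nY t <= 1 -> forall n, psum p s t n <= B `^ p) ->
  forall t, Y t -> forall n, psum p s t n <= (B * nY t) `^ p.
Proof.
move=> HY p0 B0 hB t Yt n.
have r0 := ms_ge0 HY Yt.
have [re|rp] : nY t = 0 \/ 0 < nY t.
  by case: (eqVneq (nY t) 0) => [->|h]; [left|right; rewrite lt_neqAle eq_sym h r0].
  have te := ms_eq0 HY Yt re.
  rewrite /psum te; apply: le_trans (powR_ge0 _ _); rewrite le_eqVlt; apply/orP; left.
  by apply/eqP; apply: big1 => i _; rewrite mulr0 normr0 pow0.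
set r := nY t.
pose t' := fun k => r^-1 * t k.
have Yt' : Y t' by apply: ms_scal HY _ _ Yt.
have nt' : nY t' = 1 by rewrite /t' (ms_Z HY) // ger0_norm ?invr_ge0 // mulVf ?gt_eqF.
have -> : t = (fun k => r * t' k).
  by apply: funext => k; rewrite /t' mulrA divff ?gt_eqF // mul1r.
rewrite psum_scale_t powRM // mulrC ger0_norm //.
apply: ler_wpM2r; first exact: powR_ge0.
by apply: hB => //; rewrite nt'.
Qed.

Lemma Wle (R : realType) (Y : set (nat -> R)) nY (p : R) s t n :
  maximal_seq_space Y nY -> 0 < p -> IDL Y nY p s -> Y t ->
  psum p s t n <= (opnorm Y nY p s * nY t) `^ p.
Proof.
move=> HY p0 hs Yt.
apply: (scale_bound HY p0 (opnorm_ge0 HY hs)) => // u Yu u1 m. have [hel _] := hs.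
apply: le_trans (lp_le_ellp m p0 (hel u Yu)) _.
apply: pow_le; [exact: ltW | exact: lp_norm_ge0 | exact: opnorm_ge].
Qed.

Lemma Wroot (R : realType) (Y : set (nat -> R)) nY (p : R) s t n :
  maximal_seq_space Y nY -> 0 < p -> IDL Y nY p s -> Y t ->
  psum p s t n `^ p^-1 <= opnorm Y nY p s * nY t.
Proof.
move=> HY p0 hs Yt; apply: pow_le_rt => //; first exact: psum_ge0.
  by apply: mulr_ge0; [exact: opnorm_ge0 | exact: (ms_ge0 HY Yt)].
exact: Wle.
Qed.

Lemma Wge (R : realType) (Y : set (nat -> R)) nY (p : R) s (B : R) :
  maximal_seq_space Y nY -> 0 < p -> 0 <= B ->
  (forall t, Y t -> nY t <= 1 -> forall n, psum p s t n <= B `^ p) ->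
  IDL Y nY p s /\ opnorm Y nY p s <= B.
Proof.
move=> HY p0 B0 hB.
have hsb := scale_bound HY p0 B0 hB.
have hlp : forall t, Y t -> lp_norm p (fun k => s k * t k) <= B * nY t.
  move=> t Yt; have bt0 : 0 <= B * nY t by apply: mulr_ge0 => //; exact: (ms_ge0 HY Yt).
  rewrite -(@powRK _ p (B * nY t)) ?gt_eqF //.
  by apply: lp_le_of_bound => //; [exact: powR_ge0 | exact: hsb].
split.
  split; last by exists B.
  by move=> t Yt; exists ((B * nY t) `^ p) => n; apply: hsb.
apply: opnorm_le => // t Yt t1; apply: le_trans (hlp t Yt) _.
by rewrite -[X in _ <= X]mulr1; apply: ler_wpM2l.
Qed.

Lemma IDL_add (R : realType) (Y : set (nat -> R)) nY (p : R) x y :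
  maximal_seq_space Y nY -> 1 <= p -> IDL Y nY p x -> IDL Y nY p y ->
  IDL Y nY p (fun k => x k + y k) /\
  opnorm Y nY p (fun k => x k + y k) <= opnorm Y nY p x + opnorm Y nY p y.
Proof.
move=> HY p1 hx hy. have p0 : 0 < p by apply: lt_le_trans p1.
have x0 := opnorm_ge0 HY hx. have y0 := opnorm_ge0 HY hy.
apply: (Wge HY p0 (addr_ge0 x0 y0)).
move=> t Yt t1 n.
apply: (pow_lt_le p0 (psum_ge0 _ _ _ _) (addr_ge0 x0 y0)).
have tt0 := ms_ge0 HY Yt.
have := minkowski_fin n (fun k => x k * t k) (fun k => y k * t k) p1.
rewrite /psum.
under eq_bigr => i _ do rewrite -mulrDl.
move=> /le_trans; apply.
apply: lerD.
  apply: le_trans (Wroot n HY p0 hx Yt) _.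
  by rewrite -[X in _ <= X]mulr1; exact: (ler_wpM2l x0 t1).
apply: le_trans (Wroot n HY p0 hy Yt) _.
by rewrite -[X in _ <= X]mulr1; exact: (ler_wpM2l y0 t1).
Qed.

Lemma IDL_scal (R : realType) (Y : set (nat -> R)) nY (p : R) (a : R) x :
  maximal_seq_space Y nY -> 0 < p -> IDL Y nY p x ->
  IDL Y nY p (fun k => a * x k) /\
  opnorm Y nY p (fun k => a * x k) <= `|a| * opnorm Y nY p x.
Proof.
move=> HY p0 hx. have x0 := opnorm_ge0 HY hx.
apply: (Wge HY p0 (mulr_ge0 (normr_ge0 a) x0)).
move=> t Yt t1 n. have tt0 := ms_ge0 HY Yt.
rewrite psum_scale_s powRM //.
apply: ler_wpM2l; first exact: powR_ge0.
apply: le_trans (Wle n HY p0 hx Yt) _.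
apply: pow_le; [exact: ltW | exact: (mulr_ge0 x0 tt0) |].
by rewrite -[X in _ <= X]mulr1; exact: (ler_wpM2l x0 t1).
Qed.

Lemma IDL_sub (R : realType) (Y : set (nat -> R)) nY (p : R) x y :
  maximal_seq_space Y nY -> 1 <= p -> IDL Y nY p x -> IDL Y nY p y ->
  IDL Y nY p (fun k => x k - y k).
Proof.
move=> HY p1 hx hy. have p0 : 0 < p by apply: lt_le_trans p1.
have [h _] := IDL_add HY p1 hx (proj1 (IDL_scal (-1) HY p0 hy)).
by have <- : (fun k => x k + (-1) * y k) = (fun k => x k - y k)
  by apply: funext => k; rewrite mulN1r.
Qed.

Lemma unit_vec_neq (R : realType) k j : j != k -> @unit_vec R k j = 0.
Proof. by rewrite /unit_vec => /negbTE ->. Qed.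

Lemma psum_unit (R : realType) (p : R) x k : 0 < p ->
  psum p x (unit_vec k) k.+1 = `|x k| `^ p.
Proof.
move=> p0; rewrite /psum big_ord_recr /= big1 ?add0r.
  by rewrite /unit_vec eqxx mulr1.
by move=> i _; rewrite unit_vec_neq ?ltn_eqF // mulr0 normr0 (pow0 p0).
Qed.

Lemma IDL_coord (R : realType) (Y : set (nat -> R)) nY (p : R) x k :
  maximal_seq_space Y nY -> 0 < p -> IDL Y nY p x -> `|x k| <= opnorm Y nY p x.
Proof.
move=> HY p0 hx.
have Ye : Y (unit_vec k) by apply: (ms_l1 HY) (unit_ell1 _ k).
have := Wle k.+1 HY p0 hx Ye; rewrite (psum_unit _ _ p0) (ms_unit HY) mulr1.
by apply: (pow_le_inv p0 (normr_ge0 _) (opnorm_ge0 HY hx)).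
Qed.

Lemma IDL_ell1 (R : realType) (Y : set (nat -> R)) nY (p : R) (s : nat -> R) (M : R) :
  maximal_seq_space Y nY -> 1 <= p -> (forall n, \sum_(k < n) `|s k| <= M) ->
  IDL Y nY p s /\ opnorm Y nY p s <= M.
Proof.
move=> HY p1 hM. have p0 : 0 < p by apply: lt_le_trans p1.
have M0 : 0 <= M by have := hM 0%N; rewrite big_ord0.
apply: (Wge HY p0 M0) => t Yt t1 n.
have h := sum_powR_le n p1 (fun k => normr_ge0 (s k * t k)).
rewrite /= in h; rewrite /psum; apply: le_trans h _.
apply: pow_le; [exact: ltW | by apply: sumr_ge0 => i _ |].
apply: le_trans (hM n).
apply: ler_sum => i _; rewrite normrM -[X in _ <= X]mulr1.
apply: ler_wpM2l; [exact: normr_ge0 | apply: le_trans (coord_le HY i Yt) t1].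
Qed.

Lemma unit_sum_le1 (R : realType) k n : \sum_(j < n) `|@unit_vec R k j| <= 1.
Proof.
apply: le_trans (@sum_fin_le _ (fun j => `|@unit_vec R k j|) k.+1 n _ _) _.
  by move=> j; exact: normr_ge0.
  by move=> j kj; rewrite unit_vec0 // normr0.
rewrite big_ord_recr /= big1 ?add0r; first by rewrite /unit_vec eqxx normr1.
by move=> i _; rewrite unit_vec_neq ?ltn_eqF // normr0.
Qed.

Lemma IDL_mul (R : realType) (Y : set (nat -> R)) nY (p : R) (a s : nat -> R) (M : R) :
  maximal_seq_space Y nY -> 0 < p -> IDL Y nY p s -> (forall k, `|a k| <= M) ->
  IDL Y nY p (fun k => a k * s k) /\
  opnorm Y nY p (fun k => a k * s k) <= M * opnorm Y nY p s.
Proof.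
move=> HY p0 hs hM. have s0 := opnorm_ge0 HY hs.
have M0 : 0 <= M by apply: le_trans (hM 0%N).
apply: (Wge HY p0 (mulr_ge0 M0 s0)).
move=> t Yt t1 n. have tt0 := ms_ge0 HY Yt.
apply: (@le_trans _ _ (M `^ p * psum p s t n)).
  rewrite /psum mulr_sumr; apply: ler_sum => i _.
  rewrite -(@powRM _ M _ p M0 (normr_ge0 _)).
  apply: (pow_le (ltW p0) (normr_ge0 _)).
  rewrite -mulrA normrM; exact: (ler_wpM2r (normr_ge0 _) (hM i)).
rewrite (@powRM _ M _ p M0 s0).
apply: (ler_wpM2l (powR_ge0 _ _)).
apply: le_trans (Wle n HY p0 hs Yt) _.
apply: (pow_le (ltW p0) (mulr_ge0 s0 tt0)).
by rewrite -[X in _ <= X]mulr1; exact: (ler_wpM2l s0 t1).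
Qed.

Lemma psum_proj (R : realType) (p : R) s t n :
  psum p (proj_seq n s) t n = psum p s t n.
Proof. by apply: eq_bigr => i _; rewrite /proj_seq ltn_ord. Qed.

Lemma IDL_proj_le (R : realType) (Y : set (nat -> R)) nY (p : R) s n :
  maximal_seq_space Y nY -> 0 < p -> IDL Y nY p s ->
  opnorm Y nY p (proj_seq n s) <= opnorm Y nY p s.
Proof.
move=> HY p0 hs. have s0 := opnorm_ge0 HY hs.
apply: (proj2 (Wge (s := proj_seq n s) HY p0 s0 _)).
move=> t Yt t1 m. have tt0 := ms_ge0 HY Yt.
apply: (@le_trans _ _ (psum p s t m)).
  apply: ler_sum => i _; apply: (pow_le (ltW p0) (normr_ge0 _)).
  rewrite /proj_seq; case: ifP => _; first exact: lexx.
  by rewrite mul0r normr0; exact: normr_ge0.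
apply: le_trans (Wle m HY p0 hs Yt) _.
apply: (pow_le (ltW p0) (mulr_ge0 s0 tt0)).
by rewrite -[X in _ <= X]mulr1; exact: (ler_wpM2l s0 t1).
Qed.

Lemma IDL_iii (R : realType) (Y : set (nat -> R)) nY (p : R) s (M : R) :
  maximal_seq_space Y nY -> 1 <= p ->
  (forall n, opnorm Y nY p (proj_seq n s) <= M) ->
  IDL Y nY p s /\ opnorm Y nY p s <= M.
Proof.
move=> HY p1 hM. have p0 : 0 < p by apply: lt_le_trans p1.
have hP : forall n, IDL Y nY p (proj_seq n s).
  move=> n; have [M' hM'] := proj_ell1 n s.
  by have [] := IDL_ell1 HY p1 hM'.
have M0 : 0 <= M by apply: le_trans (hM 0%N); exact: opnorm_ge0.
apply: (Wge HY p0 M0) => t Yt t1 n. have tt0 := ms_ge0 HY Yt.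
rewrite -psum_proj; apply: le_trans (Wle n HY p0 (hP n) Yt) _.
apply: (pow_le (ltW p0) (mulr_ge0 (opnorm_ge0 HY (hP n)) tt0)).
rewrite -[X in _ <= X]mulr1; apply: ler_pM; [exact: opnorm_ge0 | exact: tt0 | exact: hM | exact: t1].
Qed.

Lemma cauchy_lim (R: realType) (u : nat -> R) :
  (forall e : R, 0 < e -> exists N, forall m n, (N <= m)%N -> (N <= n)%N -> `|u m - u n| < e) ->
  exists x, forall e : R, 0 < e -> exists N, forall n, (N <= n)%N -> `|u n - x| < e.
Proof.
move=> H.
have cv : cvgn u.
  apply/cauchy_cvgP/cauchy_ballP => e e0.
  have [N HN] := H e e0.
  exists (u @` [set n | (N <= n)%N], u @` [set n | (N <= n)%N]) => /=.
    by split; exists N => // n /= Hn; exists n.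
  case=> a b /= [[m Hm <-] [n Hn <-]]. rewrite /ball /= distrC. exact: HN.
exists (limn u) => e e0.
move: cv => /cvgrPdist_lt /(_ e e0) [N _ HN].
exists N => n Hn. rewrite distrC. exact: HN.
Qed.

Lemma finite_cvg (R : realType) (v : nat -> nat -> R) :
  (forall k (e : R), 0 < e -> exists N, forall l, (N <= l)%N -> `|v l k| < e) ->
  forall n (e : R), 0 < e -> exists L, forall l, (L <= l)%N -> \sum_(k < n) `|v l k| <= e.
Proof.
move=> hv; elim=> [|n IH] e e0.
  by exists 0%N => l _; rewrite big_ord0 ltW.
have e2 : 0 < e / 2 by rewrite divr_gt0.
have [L1 h1] := IH _ e2. have [L2 h2] := hv n _ e2.
exists (maxn L1 L2) => l hl; rewrite big_ord_recr /=.
have := h1 l (leq_trans (leq_maxl _ _) hl).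
have := h2 l (leq_trans (leq_maxr _ _) hl).
move=> a b; lra.
Qed.

Lemma IDL_complete (R : realType) (Y : set (nat -> R)) nY (p : R) :
  maximal_seq_space Y nY -> 1 <= p ->
  is_complete_seq_space (IDL Y nY p) (opnorm Y nY p).
Proof.
move=> HY p1 u hu hc. have p0 : 0 < p by apply: lt_le_trans p1.
have hd : forall m n, IDL Y nY p (fun k => u m k - u n k).
  by move=> m n; apply: IDL_sub.
have hk : forall k, exists xk, forall e : R, 0 < e ->
    exists N, forall n, (N <= n)%N -> `|u n k - xk| < e.
  move=> k; apply: cauchy_lim => e e0.
  have [N hN] := hc e e0; exists N => m n hm hn.
  by apply: le_lt_trans (IDL_coord k HY p0 (hd m n)) (hN m n hm hn).
have [x hx] := choice hk.
have key : forall e : R, 0 < e -> exists N, forall m, (N <= m)%N ->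
    IDL Y nY p (fun k => u m k - x k) /\ opnorm Y nY p (fun k => u m k - x k) <= e + e.
  move=> e e0; have [N hN] := hc e e0; exists N => m hm.
  apply: (Wge HY p0 (addr_ge0 (ltW e0) (ltW e0))).
  move=> t Yt t1 n. have tt0 := ms_ge0 HY Yt.
  have [L hL] := @finite_cvg _ (fun l k => u l k - x k) (fun k e e0 => hx k e e0) n e e0.
  set l := maxn N L.
  have hlN : (N <= l)%N by apply: leq_maxl.
  have hlL : (L <= l)%N by apply: leq_maxr.
  apply: (pow_lt_le p0 (psum_ge0 _ _ _ _) (addr_ge0 (ltW e0) (ltW e0))).
  have := minkowski_fin n (fun k => (u m k - u l k) * t k) (fun k => (u l k - x k) * t k) p1.
  rewrite /psum.
  under eq_bigr => i _ do rewrite -mulrDl subrKA.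
  move=> /le_trans; apply; apply: lerD.
    apply: le_trans (Wroot n HY p0 (hd m l) Yt) _.
    apply: le_trans (ltW (hN m l hm hlN)).
    by rewrite -[X in _ <= X]mulr1; apply: ler_wpM2l; [exact: opnorm_ge0 | exact: t1].
  apply: le_trans (sum_root_le n p1 (fun k => normr_ge0 ((u l k - x k) * t k))) _.
  apply: le_trans (hL l hlL).
  apply: ler_sum => i _; rewrite normrM -[X in _ <= X]mulr1.
  by apply: ler_wpM2l; [exact: normr_ge0 | apply: le_trans (coord_le HY i Yt) t1].
have [N0 hN0] := key 1 ltr01.
have [hN0x _] := hN0 N0 (leqnn _).
exists x; split.
  have := IDL_sub HY p1 (hu N0) hN0x.
  by have -> : (fun k => u N0 k - (u N0 k - x k)) = x by apply: funext => k; rewrite subKr.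
move=> e e0. have e3 : 0 < e / 3 by rewrite divr_gt0.
have [N hN] := key _ e3; exists N => n hn.
have [_ h] := hN n hn; apply: le_lt_trans h _; lra.
Qed.

Lemma IDL_max (R : realType) (Y : set (nat -> R)) nY (p : R) :
  maximal_seq_space Y nY -> 1 <= p ->
  maximal_seq_space (IDL Y nY p) (opnorm Y nY p).
Proof.
move=> HY p1. have p0 : 0 < p by apply: lt_le_trans p1.
have hl1 : forall s, ell1 s -> IDL Y nY p s.
  by move=> s [M hM]; have [] := IDL_ell1 HY p1 hM.
split; [split; [|split; [|split; [|split; [|split; [|split]]]]]|split; [|split; [|split; [|split; [|split; [|split]]]]]].
- by apply: hl1; exists 0 => n; rewrite big1 // => i _; rewrite normr0.
- by move=> x y hx hy; have [] := IDL_add HY p1 hx hy.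
- by move=> a x hx; have [] := IDL_scal a HY p0 hx.
- by move=> x hx; apply: opnorm_ge0.
- move=> x hx h0; apply: funext => k; apply/eqP; rewrite -normr_le0 -h0.
  exact: IDL_coord.
- move=> a x hx; apply/eqP; rewrite eq_le; apply/andP; split.
    by have [] := IDL_scal a HY p0 hx.
  have [->|an0] := eqVneq a 0.
    by rewrite normr0 mul0r; apply: opnorm_ge0; have [] := IDL_scal 0 HY p0 hx.
  have [hax _] := IDL_scal a HY p0 hx.
  have [_ h] := IDL_scal a^-1 HY p0 hax.
  have e : (fun k => a^-1 * (a * x k)) = x by apply: funext => k; rewrite mulrA mulVf // mul1r.
  rewrite e normfV in h.
  by rewrite -ler_pdivlMl ?normr_gt0 // mulrC.
- by move=> x y hx hy; have [] := IDL_add HY p1 hx hy.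
- exact: IDL_complete.
- exact: hl1.
- by move=> s hs; exists (opnorm Y nY p s) => k; apply: IDL_coord.
- move=> k; apply/eqP; rewrite eq_le; apply/andP; split.
    by have [] := IDL_ell1 HY p1 (@unit_sum_le1 R k).
  have := @IDL_coord _ Y nY p (unit_vec k) k HY p0 (hl1 _ (unit_ell1 _ k)).
  by rewrite /unit_vec eqxx normr1.
- by move=> a s M hs hM; apply: IDL_mul.
- move=> s; split.
    by move=> hs; exists (opnorm Y nY p s) => n; apply: IDL_proj_le.
  by case=> M hM; have [] := IDL_iii HY p1 hM.
- move=> s hs; split; first by move=> n; apply: IDL_proj_le.
  by move=> M hM; have [] := IDL_iii HY p1 hM.
Qed.

Definition sublin (R : realType) (N : (nat -> R) -> R) :=
  (forall y z, N (fun k => y k + z k) <= N y + N z) /\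
  (forall (l : R) y, 0 < l -> N (fun k => l * y k) <= l * N y).

Lemma sublin_homE (R : realType) (N : (nat -> R) -> R) (l : R) y :
  sublin N -> 0 < l -> N (fun k => l * y k) = l * N y.
Proof.
move=> [_ hh] l0; apply/eqP; rewrite eq_le hh // andTb.
have := hh l^-1 (fun k => l * y k) (invr_gt0_lt l0).
have -> : (fun k => l^-1 * (l * y k)) = y by apply: funext => k; rewrite mulrA mulVf ?lt0r_neq0 // mul1r.
by rewrite -(ler_pM2l l0) mulrA divff ?lt0r_neq0 // mul1r.
Qed.

Lemma sublin_0 (R : realType) (N : (nat -> R) -> R) : sublin N -> N (fun _ => 0) = 0.
Proof.
move=> hN. have := @sublin_homE _ N 2 (fun _ => 0) hN (ltr0Sn R 1).
have -> : (fun k : nat => (2:R) * 0) = fun _ => 0 by apply: funext => k; rewrite mulr0.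
move=> h. lra.
Qed.

Definition upd (R : realType) (n : nat) (y : nat -> R) (t : R) : nat -> R :=
  fun k => proj_seq n y k + t * unit_vec n k.

Lemma upd_proj_succ (R : realType) n (y : nat -> R) : upd n y (y n) = proj_seq n.+1 y.
Proof.
apply: funext => k; rewrite /upd /proj_seq /unit_vec.
case: (ltngtP k n) => [kn|kn|->] /=.
- by rewrite ltnS (ltnW kn) mulr0 addr0.
- by rewrite ltnS leqNgt kn mulr0 addr0.
- by rewrite ?ltnn ?eqxx ltnSn mulr1 add0r.
Qed.

Lemma upd_proj (R : realType) n (y : nat -> R) t : upd n (proj_seq n y) t = upd n y t.
Proof. by apply: funext => k; rewrite /upd /proj_seq; case: (k < n)%N. Qed.

Lemma upd_add (R : realType) n (y z : nat -> R) t1 t2 :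
  upd n (fun k => y k + z k) (t1 + t2) = (fun k => upd n y t1 k + upd n z t2 k).
Proof.
apply: funext => k; rewrite /upd /proj_seq; case: ifP => _; ring.
Qed.

Lemma upd_scale (R : realType) n (y : nat -> R) (l t : R) :
  upd n (fun k => l * y k) (l * t) = (fun k => l * upd n y t k).
Proof. by apply: funext => k; rewrite /upd /proj_seq; case: ifP => _; ring. Qed.

Lemma upd_shift (R : realType) n (y : nat -> R) (c t : R) :
  upd n y (c + t) = (fun k => upd n y c k + t * unit_vec n k).
Proof. by apply: funext => k; rewrite /upd; ring. Qed.

Lemma te_split (R : realType) n (y : nat -> R) (t : R) :
  (fun k => t * unit_vec n k) = (fun k => upd n y t k + (- proj_seq n y k)).
Proof. by apply: funext => k; rewrite /upd; ring. Qed.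

Lemma upd_cvx (R : realType) n (y : nat -> R) (s c u : R) :
  (fun k => (u - s) * upd n y c k) =
  (fun k => (u - c) * upd n y s k + (c - s) * upd n y u k).
Proof. by apply: funext => k; rewrite /upd; ring. Qed.

Lemma hb_fin (R : realType) (n : nat) : forall N : (nat -> R) -> R, sublin N ->
  (forall y, N y = N (proj_seq n y)) -> forall v : nat -> R, exists phi : nat -> R,
  (forall y : nat -> R, \sum_(k < n) phi k * y k <= N y) /\ \sum_(k < n) phi k * v k = N v.
Proof.
elim: n => [|n IH] N hN hP v.
  have N0 : forall y, N y = 0.
    move=> y; rewrite hP.
    have -> : proj_seq 0 y = (fun _ => 0) by apply: funext => k.
    exact: sublin_0 hN.
  exists (fun _ => 0); split; first by move=> y; rewrite big_ord0 N0.
  by rewrite big_ord0 N0.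
have [hadd hhom] := hN.
pose g t := N (upd n v t).
set c := v n.
have cvx : forall s u, s < c -> c < u -> (g c - g s) / (c - s) <= (g u - g c) / (u - c).
  move=> s u sc cu.
  have us : 0 < u - s by lra.
  have h : (u - s) * g c <= (u - c) * g s + (c - s) * g u.
    rewrite /g -(sublin_homE _ hN us) upd_cvx.
    apply: le_trans (hadd _ _) _.
    by rewrite !sublin_homE // ?subr_gt0.
  rewrite ler_pdivrMr ?subr_gt0 // mulrAC ler_pdivlMr ?subr_gt0 //.
  rewrite -subr_ge0; rewrite -subr_ge0 in h.
  have -> : (g u - g c) * (c - s) - (g c - g s) * (u - c) =
            (u - c) * g s + (c - s) * g u - (u - s) * g c by ring.
  exact: h.
pose L := [set (g c - g s) / (c - s) | s in [set s | s < c]].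
have Lne : L !=set0 by exists ((g c - g (c - 1)) / (c - (c - 1))); exists (c - 1) => //=; lra.
have Lub : forall u, c < u -> ubound L ((g u - g c) / (u - c)).
  by move=> u cu _ [s /= sc <-]; apply: cvx.
have Lsup : has_sup L by split => //; exists ((g (c + 1) - g c) / (c + 1 - c)); apply: Lub; lra.
set a := sup L.
have subg : forall t, g c + a * (t - c) <= g t.
  move=> t; case: (ltgtP t c) => [tc|ct|->]; last by rewrite subrr mulr0 addr0.
    have hm : L ((g c - g t) / (c - t)) by exists t.
    have := sup_upper_bound Lsup hm.
    rewrite -/a ler_pdivrMr ?subr_gt0 // => h.
    have -> : a * (t - c) = - (a * (c - t)) by ring.
    lra.
  have := ge_sup Lne (Lub t ct); rewrite -/a ler_pdivlMr ?subr_gt0 // => h. lra.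
clearbody a.
have ate : forall t, a * t <= N (fun k => t * unit_vec n k).
  move=> t; have := subg (c + t).
  rewrite /g upd_shift => h.
  have := hadd (upd n v c) (fun k => t * unit_vec n k). lra.
pose N' y := inf [set N (upd n y t) - a * t | t in [set: R]].
have Nlb : forall y t, - N (fun k => - proj_seq n y k) <= N (upd n y t) - a * t.
  move=> y t; have := ate t; rewrite (@te_split _ n y t) => h.
  have := hadd (upd n y t) (fun k => - proj_seq n y k). lra.
have N'le : forall y t, N' y <= N (upd n y t) - a * t.
  move=> y t; apply: ge_inf; last by exists t.
  by exists (- N (fun k => - proj_seq n y k)) => _ [s _ <-]; apply: Nlb.
have N'ge : forall y (b : R), (forall t, b <= N (upd n y t) - a * t) -> b <= N' y.
  move=> y b hb; apply: lb_le_inf; first by exists (N (upd n y 0) - a * 0); exists 0.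
  by move=> _ [s _ <-]; apply: hb.
have hN' : sublin N'.
  split.
    move=> y z.
    suff : N' (fun k => y k + z k) - N' z <= N' y by lra.
    apply: (N'ge) => t1.
    suff : N' (fun k => y k + z k) - (N (upd n y t1) - a * t1) <= N' z by lra.
    apply: (N'ge) => t2.
    have := N'le (fun k => y k + z k) (t1 + t2).
    rewrite upd_add => h1. have := hadd (upd n y t1) (upd n z t2). lra.
  move=> l y l0.
  suff : N' (fun k => l * y k) / l <= N' y by rewrite ler_pdivrMr // mulrC.
  apply: (N'ge) => t. rewrite ler_pdivrMr //.
  have := N'le (fun k => l * y k) (l * t).
  rewrite upd_scale (sublin_homE _ hN l0) => h.
  have -> : (N (upd n y t) - a * t) * l = l * N (upd n y t) - a * (l * t) by ring.
  exact: h.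
have hP' : forall y, N' y = N' (proj_seq n y).
  move=> y; rewrite /N'; congr inf; congr image.
  by apply: funext => t; rewrite upd_proj.
have [phi' [h1 h2]] := IH N' hN' hP' v.
have eN'v : N' v = N v - a * c.
  have eg : g c = N v by rewrite /g /c upd_proj_succ -hP.
  apply/eqP; rewrite eq_le; apply/andP; split.
    by have := N'le v c; rewrite -/(g c) eg.
  apply: (N'ge) => t; have := subg t; rewrite eg /g. lra.
exists (fun k => if k == n then a else phi' k); split.
  move=> y; rewrite big_ord_recr /= eqxx.
  under eq_bigr => i _ do rewrite ltn_eqF //.
  have := h1 y; have := N'le y (y n).
  rewrite upd_proj_succ -hP. lra.
rewrite big_ord_recr /= eqxx.
under eq_bigr => i _ do rewrite ltn_eqF //.
rewrite h2 eN'v -/c. lra.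
Qed.

Definition Dset (R : realType) (X : set (nat -> R)) (nrm : (nat -> R) -> R) (p : R)
  (tau : nat -> R) : set R :=
  [set r | exists m (xs : nat -> nat -> R), (forall i, (i < m)%N -> X (xs i)) /\
     (forall k, `|tau k| <= \sum_(i < m) `|xs i k| `^ p) /\
     r = \sum_(i < m) nrm (xs i) `^ p].

Definition Nc (R : realType) (X : set (nat -> R)) (nrm : (nat -> R) -> R) (p : R)
  (tau : nat -> R) : R := inf (Dset X nrm p tau).

Lemma D_ge0 (R : realType) (X : set (nat -> R)) nrm (p : R) tau r :
  Dset X nrm p tau r -> 0 <= r.
Proof. by move=> [m [xs [_ [_ ->]]]]; apply: sumr_ge0 => i _; exact: powR_ge0. Qed.

Lemma Nc_le (R : realType) (X : set (nat -> R)) nrm (p : R) tau r :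
  Dset X nrm p tau r -> Nc X nrm p tau <= r.
Proof.
move=> hr; apply: ge_inf => //.
by exists 0 => x hx; exact: D_ge0 hx.
Qed.

Lemma Nc_ge (R : realType) (X : set (nat -> R)) nrm (p : R) tau (b : R) :
  (exists r, Dset X nrm p tau r) -> (forall r, Dset X nrm p tau r -> b <= r) ->
  b <= Nc X nrm p tau.
Proof. by move=> [r hr] hb; apply: lb_le_inf; [exists r | exact: hb]. Qed.

Lemma Nc_ge0 (R : realType) (X : set (nat -> R)) nrm (p : R) tau :
  (exists r, Dset X nrm p tau r) -> 0 <= Nc X nrm p tau.
Proof. by move=> hne; apply: Nc_ge => // r hr; exact: D_ge0 hr. Qed.

Lemma D_one (R : realType) (X : set (nat -> R)) nrm (p : R) tau x :
  X x -> (forall k, `|tau k| <= `|x k| `^ p) -> Dset X nrm p tau (nrm x `^ p).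
Proof.
move=> Xx hx; exists 1%N, (fun _ => x); split; first by [].
by split; [move=> k; rewrite big_ord1; exact: hx | rewrite big_ord1].
Qed.

Lemma D_add (R : realType) (X : set (nat -> R)) nrm (p : R) y z r1 r2 :
  Dset X nrm p y r1 -> Dset X nrm p z r2 -> Dset X nrm p (fun k => y k + z k) (r1 + r2).
Proof.
move=> [m1 [xs1 [h1 [c1 ->]]]] [m2 [xs2 [h2 [c2 ->]]]].
pose xs i := if (i < m1)%N then xs1 i else xs2 (i - m1)%N.
have split_sum : forall f : (nat -> R) -> R,
    \sum_(i < m1 + m2) f (xs i) = \sum_(i < m1) f (xs1 i) + \sum_(i < m2) f (xs2 i).
  move=> f; rewrite big_split_ord /=; congr (_ + _).
    by apply: eq_bigr => i _; rewrite /xs /= ltn_ord.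
  apply: eq_bigr => i _; rewrite /xs /=.
  by rewrite ltnNge leq_addr /= addKn.
exists (m1 + m2)%N, xs; split.
  move=> i hi; rewrite /xs; case: ifP => him; first exact: h1.
  apply: h2; rewrite ltn_subLR //; by rewrite leqNgt him.
split; last by rewrite (split_sum (fun x => nrm x `^ p)).
move=> k; rewrite (split_sum (fun x => `|x k| `^ p)).
apply: le_trans (ler_normD _ _) _; exact: lerD (c1 k) (c2 k).
Qed.

Lemma D_scale (R : realType) (X : set (nat -> R)) nrm (p : R) y r (l : R) :
  maximal_seq_space X nrm -> 0 < p -> 0 < l ->
  Dset X nrm p y r -> Dset X nrm p (fun k => l * y k) (l * r).
Proof.
move=> HX p0 l0 [m [xs [h1 [c1 ->]]]].
have lq0 : 0 <= l `^ p^-1 by exact: powR_ge0.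
exists m, (fun i k => l `^ p^-1 * xs i k); split.
  by move=> i hi; apply: (ms_scal HX); exact: h1.
split.
  move=> k; rewrite normrM (ger0_norm (ltW l0)).
  under eq_bigr => i _ do rewrite normrM (ger0_norm lq0) (powRM _ lq0 (normr_ge0 _)) (powRKV (lt0r_neq0 p0) (ltW l0)).
  rewrite -mulr_sumr; apply: ler_wpM2l; [exact: ltW l0 | exact: c1 k].
rewrite mulr_sumr; apply: eq_bigr => i _.
rewrite (ms_Z HX _ (h1 i (ltn_ord i))) (ger0_norm lq0).
by rewrite (powRM _ lq0 (ms_ge0 HX (h1 i (ltn_ord i)))) (powRKV (lt0r_neq0 p0) (ltW l0)).
Qed.

Lemma D_abs (R : realType) (X : set (nat -> R)) nrm (p : R) y z r :
  (forall k, `|y k| = `|z k|) -> Dset X nrm p y r -> Dset X nrm p z r.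
Proof.
move=> hyz [m [xs [h1 [c1 e]]]]; exists m, xs; split => //; split => //.
by move=> k; rewrite -hyz.
Qed.

Lemma Nc_add (R : realType) (X : set (nat -> R)) nrm (p : R) y z :
  (exists r, Dset X nrm p y r) -> (exists r, Dset X nrm p z r) ->
  Nc X nrm p (fun k => y k + z k) <= Nc X nrm p y + Nc X nrm p z.
Proof.
move=> hy hz.
suff : Nc X nrm p (fun k => y k + z k) - Nc X nrm p z <= Nc X nrm p y by lra.
apply: (Nc_ge hy) => r1 hr1.
suff : Nc X nrm p (fun k => y k + z k) - r1 <= Nc X nrm p z by lra.
apply: (Nc_ge hz) => r2 hr2.
have := Nc_le (D_add hr1 hr2). lra.
Qed.

Lemma Nc_scale (R : realType) (X : set (nat -> R)) nrm (p : R) y (l : R) :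
  maximal_seq_space X nrm -> 0 < p -> 0 < l -> (exists r, Dset X nrm p y r) ->
  Nc X nrm p (fun k => l * y k) <= l * Nc X nrm p y.
Proof.
move=> HX p0 l0 hy.
suff : Nc X nrm p (fun k => l * y k) / l <= Nc X nrm p y by rewrite ler_pdivrMr // mulrC.
apply: (Nc_ge hy) => r hr; rewrite ler_pdivrMr // mulrC.
exact: Nc_le (D_scale HX p0 l0 hr).
Qed.

Lemma X_sumabs (R : realType) (X : set (nat -> R)) nrm m (xs : nat -> nat -> R) :
  maximal_seq_space X nrm -> (forall i, (i < m)%N -> X (xs i)) ->
  X (fun j => \sum_(i < m) `|xs i j|).
Proof.
move=> HX; elim: m => [|m IH] h.
  have -> : (fun j => \sum_(i < 0) `|xs i j|) = (fun _ => 0 : R)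
    by apply: funext => j; rewrite big_ord0.
  exact: ms_zero HX.
have -> : (fun j => \sum_(i < m.+1) `|xs i j|) = (fun j => \sum_(i < m) `|xs i j| + `|xs m j|)
  by apply: funext => j; rewrite big_ord_recr.
apply: (ms_add HX); first by apply: IH => i hi; apply: h; apply: ltnW.
by have [] := ms_abs HX (h m (ltnSn m)).
Qed.

Lemma X_w (R : realType) (X : set (nat -> R)) nrm (p : R) m (xs : nat -> nat -> R) :
  maximal_seq_space X nrm -> 1 <= p -> (forall i, (i < m)%N -> X (xs i)) ->
  X (fun j => (\sum_(i < m) `|xs i j| `^ p) `^ p^-1).
Proof.
move=> HX p1 h.
have hle : forall j, `|(\sum_(i < m) `|xs i j| `^ p) `^ p^-1| <= `|\sum_(i < m) `|xs i j| |.
  move=> j.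
  have h1 := sum_root_le m p1 (fun i => normr_ge0 (xs i j)).
  rewrite ger0_norm; last exact: powR_ge0.
  rewrite ger0_norm; last by apply: sumr_ge0 => i _; exact: normr_ge0.
  exact: h1.
by have [] := solid HX (X_sumabs HX h) hle.
Qed.

Lemma D_lower (R : realType) (X : set (nat -> R)) nrm (p c : R) tau r :
  maximal_seq_space X nrm -> 1 <= p -> pconvex_const X nrm p c ->
  Dset X nrm p tau r ->
  X (fun k => `|tau k| `^ p^-1) /\ nrm (fun k => `|tau k| `^ p^-1) <= c * r `^ p^-1.
Proof.
move=> HX p1 [c0 hc] [m [xs [h1 [c1 ->]]]].
have p0 : 0 < p by apply: lt_le_trans p1.
have Xw := X_w HX p1 h1.
have hle : forall k, `| `|tau k| `^ p^-1 | <= `|(\sum_(i < m) `|xs i k| `^ p) `^ p^-1|.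
  move=> k; rewrite (ger0_norm (powR_ge0 _ _)) (ger0_norm (powR_ge0 _ _)).
  exact: (pow_le (ltW (invr_gt0_lt p0)) (normr_ge0 _) (c1 k)).
have [h2 h3] := solid HX Xw hle.
by split => //; apply: le_trans h3 (hc m xs h1).
Qed.

Lemma Nc_lower (R : realType) (X : set (nat -> R)) nrm (p c : R) tau :
  maximal_seq_space X nrm -> 1 <= p -> pconvex_const X nrm p c ->
  (exists r, Dset X nrm p tau r) ->
  (nrm (fun k => `|tau k| `^ p^-1) / c) `^ p <= Nc X nrm p tau.
Proof.
move=> HX p1 hc hne. have p0 : 0 < p by apply: lt_le_trans p1.
have c0 : 0 < c by case: hc.
apply: (Nc_ge hne) => r hr.
have [Xt ht] := D_lower HX p1 hc hr.
have r0 := D_ge0 hr.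
rewrite -(powRKV (lt0r_neq0 p0) r0).
apply: pow_le (ltW p0) _ _.
  exact: divr_ge0 (ms_ge0 HX Xt) (ltW c0).
by rewrite ler_pdivrMr // mulrC.
Qed.

Lemma proj_proj (R : realType) n (y : nat -> R) : proj_seq n (proj_seq n y) = proj_seq n y.
Proof. by apply: funext => k; rewrite /proj_seq; case: (k < n)%N. Qed.

Lemma abs_pow_root (R : realType) (p a : R) : 0 < p -> (`| a| `^ p) `^ p^-1 = `|a|.
Proof. by move=> p0; rewrite powRK ?normr_ge0 // lt0r_neq0. Qed.

Lemma KL (R : realType) (X : set (nat -> R)) nrm (p c : R) (s : nat -> R) (n : nat) :
  maximal_seq_space X nrm -> 1 <= p -> pconvex_const X nrm p c -> X s ->
  exists t, IDL X nrm p t /\ opnorm X nrm p t <= 1 /\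
    (nrm (proj_seq n s) / c) `^ p <= psum p s t n.
Proof.
move=> HX p1 hc Xs. have p0 : 0 < p by apply: lt_le_trans p1.
have pn0 : p != 0 := lt0r_neq0 p0.
have pi0 : 0 < p^-1 := invr_gt0_lt p0.
have c0 : 0 < c by case: hc.
have fin_ne : forall tau : nat -> R, (forall k, (n <= k)%N -> tau k = 0) ->
    exists r, Dset X nrm p tau r.
  move=> tau ht; exists (nrm (fun k => `|tau k| `^ p^-1) `^ p).
  apply: D_one.
    apply: (ms_l1 HX); apply: (@fin_ell1 _ _ n) => k hk.
    by rewrite ht // normr0 (pow0 pi0).
  move=> k; rewrite (ger0_norm (powR_ge0 _ _)) (powRKV pn0 (normr_ge0 _)).
  exact: lexx.
have Pfin : forall (y : nat -> R) k, (n <= k)%N -> proj_seq n y k = 0.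
  by move=> y k hk; rewrite /proj_seq ltnNge hk.
pose N y := Nc X nrm p (proj_seq n y).
have hN : sublin N.
  split.
    move=> y z; rewrite /N.
    have -> : proj_seq n (fun k => y k + z k) = (fun k => proj_seq n y k + proj_seq n z k).
      by apply: funext => k; rewrite /proj_seq; case: (k < n)%N; rewrite ?addr0.
    by apply: Nc_add; apply: fin_ne; apply: Pfin.
  move=> l y l0; rewrite /N.
  have -> : proj_seq n (fun k => l * y k) = (fun k => l * proj_seq n y k).
    by apply: funext => k; rewrite /proj_seq; case: (k < n)%N; rewrite ?mulr0.
  exact: Nc_scale HX p0 l0 (fin_ne _ (Pfin y)).
have hP : forall y, N y = N (proj_seq n y) by move=> y; rewrite /N proj_proj.
pose v := fun k => `|s k| `^ p.
have [phi [h1 h2]] := hb_fin hN hP v.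
pose psi k := `|phi k|.
have psi0 : forall k, 0 <= psi k by move=> k; exact: normr_ge0.
have fact1 : forall x, X x -> \sum_(k < n) psi k * `|x k| `^ p <= nrm x `^ p.
  move=> x Xx.
  pose sg k : R := if phi k < 0 then -1 else 1.
  have e : \sum_(k < n) psi k * `|x k| `^ p = \sum_(k < n) phi k * (sg k * `|x k| `^ p).
    apply: eq_bigr => i _; rewrite mulrA /psi /sg; case: ifP => h.
      by rewrite ltr0_norm // mulrN1.
    by rewrite ger0_norm ?mulr1 // leNgt h.
  rewrite e; apply: le_trans (h1 (fun k => sg k * `|x k| `^ p)) _; rewrite /N; apply: Nc_le; apply: (D_one nrm Xx).
  move=> k; rewrite /proj_seq; case: ifP => _.
    rewrite normrM (ger0_norm (powR_ge0 _ _)) /sg.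
    by case: ifP => _; rewrite ?normrN normr1 mul1r; exact: lexx.
  by rewrite normr0; exact: powR_ge0.
have XPs : X (proj_seq n s) by apply: (ms_l1 HX); exact: proj_ell1.
have fact2 : (nrm (proj_seq n s) / c) `^ p <= \sum_(k < n) psi k * v k.
  apply: (@le_trans _ _ (\sum_(k < n) phi k * v k)); last first.
    apply: ler_sum => i _; apply: ler_wpM2r; [exact: powR_ge0 | exact: ler_norm].
  rewrite h2 /N.
  apply: le_trans (Nc_lower HX p1 hc (fin_ne _ (Pfin v))).
  have e : (fun k => `|proj_seq n v k| `^ p^-1) = (fun k => `|proj_seq n s k|).
    apply: funext => k; rewrite /proj_seq /v; case: ifP => _.
      by rewrite (ger0_norm (powR_ge0 _ _)) (powRK pn0 (normr_ge0 _)).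
    by rewrite normr0 (pow0 pi0).
  rewrite e; have [_ ->] := ms_abs HX XPs; exact: lexx.
pose t k := if (k < n)%N then psi k `^ p^-1 else 0.
have term : forall a k, (k < n)%N -> `|a * t k| `^ p = psi k * `|a| `^ p.
  move=> a k hk; rewrite /t hk normrM (ger0_norm (powR_ge0 _ _)).
  by rewrite (powRM _ (normr_ge0 _) (powR_ge0 _ _)) (powRKV pn0 (psi0 k)) mulrC.
have term0 : forall a k, (n <= k)%N -> `|a * t k| `^ p = 0.
  by move=> a k hk; rewrite /t ltnNge hk /= mulr0 normr0 (pow0 p0).
have [ht1 ht2] : IDL X nrm p t /\ opnorm X nrm p t <= 1.
  apply: (Wge HX p0 ler01) => x Xx x1 m.
  rewrite powR1 /psum.
  apply: (@le_trans _ _ (\sum_(k < n) `|t k * x k| `^ p)).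
    apply: (@sum_fin_le _ (fun k => `|t k * x k| `^ p)); first by move=> k; exact: powR_ge0.
    by move=> k hk; rewrite mulrC term0.
  have e : \sum_(k < n) `|t k * x k| `^ p = \sum_(k < n) psi k * `|x k| `^ p.
    by apply: eq_bigr => i _; rewrite mulrC term.
  rewrite e; apply: le_trans (fact1 x Xx) _.
  apply: le_trans (pow_le (ltW p0) (ms_ge0 HX Xx) x1) _; rewrite powR1; exact: lexx.
exists t; split => //; split => //.
apply: le_trans fact2 _; rewrite le_eqVlt; apply/orP; left; apply/eqP.
by rewrite /psum; apply: eq_bigr => i _; rewrite term.
Qed.

Lemma psum_comm (R : realType) (p : R) s t n : psum p s t n = psum p t s n.
Proof. by apply: eq_bigr => i _; rewrite mulrC. Qed.

Lemma X_sub_IDL0 (R : realType) (X : set (nat -> R)) nrm (p : R) s :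
  maximal_seq_space X nrm -> 1 <= p -> X s ->
  IDL (IDL X nrm p) (opnorm X nrm p) p s /\
  opnorm (IDL X nrm p) (opnorm X nrm p) p s <= nrm s.
Proof.
move=> HX p1 Xs. have p0 : 0 < p by apply: lt_le_trans p1.
have HY := IDL_max HX p1. have s0 := ms_ge0 HX Xs.
apply: (Wge HY p0 s0) => t ht t1 m.
rewrite psum_comm; apply: le_trans (Wle m HX p0 ht Xs) _.
apply: (pow_le (ltW p0) (mulr_ge0 (opnorm_ge0 HX ht) s0)).
rewrite -[X in _ <= X]mul1r; apply: ler_wpM2r; [exact: s0 | exact: t1].
Qed.

Lemma KL2 (R : realType) (X : set (nat -> R)) nrm (p c : R) s n :
  maximal_seq_space X nrm -> 1 <= p -> pconvex_const X nrm p c -> X s ->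
  IDL (IDL X nrm p) (opnorm X nrm p) p s ->
  nrm (proj_seq n s) <= c * opnorm (IDL X nrm p) (opnorm X nrm p) p s.
Proof.
move=> HX p1 hc Xs hs. have p0 : 0 < p by apply: lt_le_trans p1.
have c0 : 0 < c by case: hc.
have HY := IDL_max HX p1.
have [t [ht [t1 hps]]] := KL n HX p1 hc Xs.
have A0 := opnorm_ge0 HY hs.
have h := Wle n HY p0 hs ht.
have h' : (nrm (proj_seq n s) / c) `^ p <= opnorm (IDL X nrm p) (opnorm X nrm p) p s `^ p.
  apply: le_trans hps _; apply: le_trans h _.
  apply: (pow_le (ltW p0) (mulr_ge0 A0 (opnorm_ge0 HX ht))).
  rewrite -[X in _ <= X]mulr1; apply: ler_wpM2l; [exact: A0 | exact: t1].
have XPs : X (proj_seq n s) by apply: (ms_l1 HX); exact: proj_ell1.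
have := pow_le_inv p0 (divr_ge0 (ms_ge0 HX XPs) (ltW c0)) A0 h'.
by rewrite ler_pdivrMr // mulrC.
Qed.

Lemma lower_c (R : realType) (X : set (nat -> R)) nrm (p c : R) s :
  maximal_seq_space X nrm -> 1 <= p -> pconvex_const X nrm p c -> X s ->
  nrm s <= c * opnorm (IDL X nrm p) (opnorm X nrm p) p s.
Proof.
move=> HX p1 hc Xs.
have [hs _] := X_sub_IDL0 HX p1 Xs.
have [_ h] := ms_iii2 HX Xs; apply: h => n.
exact: KL2.
Qed.

Lemma IDL0_sub_X (R : realType) (X : set (nat -> R)) nrm (p c : R) s :
  maximal_seq_space X nrm -> 1 <= p -> pconvex_const X nrm p c ->
  IDL (IDL X nrm p) (opnorm X nrm p) p s -> X s.
Proof.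
move=> HX p1 hc hs. have p0 : 0 < p by apply: lt_le_trans p1.
have c0 : 0 < c by case: hc.
have HY := IDL_max HX p1.
apply/(ms_iii HX); exists (c * opnorm (IDL X nrm p) (opnorm X nrm p) p s) => n.
have XPs : X (proj_seq n s) by apply: (ms_l1 HX); exact: proj_ell1.
have [hPs _] := X_sub_IDL0 HX p1 XPs.
have := KL2 n HX p1 hc XPs hPs; rewrite proj_proj => h; apply: le_trans h _.
apply: ler_wpM2l; [exact: ltW c0 | exact: IDL_proj_le HY p0 hs].
Qed.

Lemma const_ge1 (R : realType) (X : set (nat -> R)) nrm (p c : R) :
  maximal_seq_space X nrm -> 1 <= p -> pconvex_const X nrm p c -> 1 <= c.
Proof.
move=> HX p1 [c0 hc]. have p0 : 0 < p by apply: lt_le_trans p1.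
have Xe : X (unit_vec 0) by apply: (ms_l1 HX); exact: unit_ell1.
have := hc 1%N (fun _ => unit_vec 0) (fun _ _ => Xe).
have -> : (fun j => (\sum_(i < 1) `|(fun _ => @unit_vec R 0) i j| `^ p) `^ p^-1) = unit_vec 0.
  apply: funext => j; rewrite big_ord1 /= (abs_pow_root _ p0).
  by rewrite ger0_norm // /unit_vec; case: eqP.
by rewrite big_ord1 (ms_unit HX) powR1 /= powR1 /= mulr1.
Qed.

Lemma Mp_ge1 (R : realType) (X : set (nat -> R)) nrm (p : R) :
  maximal_seq_space X nrm -> 1 <= p -> pconvex X nrm p -> 1 <= Mp X nrm p.
Proof.
move=> HX p1 [c hc]; apply: lb_le_inf; first by exists c.
by move=> d hd; exact: const_ge1 HX p1 hd.
Qed.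

Lemma Mp_bound (R : realType) (X : set (nat -> R)) nrm (p z A : R) :
  pconvex X nrm p -> 0 <= A ->
  (forall c, pconvex_const X nrm p c -> z <= c * A) -> z <= Mp X nrm p * A.
Proof.
move=> [c0 hc0] A0 hz.
have [Ae|Ap] : A = 0 \/ 0 < A.
  by case: (eqVneq A 0) => [->|h]; [left|right; rewrite lt_neqAle eq_sym h A0].
  by have := hz c0 hc0; rewrite Ae !mulr0.
rewrite -ler_pdivrMr //.
apply: lb_le_inf; first by exists c0.
by move=> c hc; rewrite ler_pdivrMr //; apply: hz.
Qed.

Lemma Xpow_ne (R : realType) (X : set (nat -> R)) nrm (p : R) x :
  0 < p -> Xpow X p x -> exists r, Dset X nrm p x r.
Proof.
move=> p0 [_ hx]; exists (nrm (fun k => `|x k| `^ p^-1) `^ p).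
apply: (D_one nrm hx) => k.
rewrite (ger0_norm (powR_ge0 _ _)) (powRKV (lt0r_neq0 p0) (normr_ge0 _)); exact: lexx.
Qed.

Lemma D0 (R : realType) (X : set (nat -> R)) nrm (p : R) : Dset X nrm p (fun _ => 0) 0.
Proof.
exists 0%N, (fun _ _ => 0); split => //; split; last by rewrite big_ord0.
by move=> k; rewrite big_ord0 normr0; exact: lexx.
Qed.

Lemma Nc0 (R : realType) (X : set (nat -> R)) nrm (p : R) : Nc X nrm p (fun _ => 0) = 0.
Proof.
apply/eqP; rewrite eq_le; apply/andP; split; first exact: Nc_le (D0 _ _ _).
by apply: Nc_ge0; exists 0; exact: D0.
Qed.

Lemma Nc_absE (R : realType) (X : set (nat -> R)) nrm (p : R) y z :
  (forall k, `|y k| = `|z k|) -> Nc X nrm p y = Nc X nrm p z.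
Proof.
move=> h; rewrite /Nc; congr inf; apply/seteqP; split => r.
  exact: D_abs h.
by apply: D_abs => k; rewrite h.
Qed.

Lemma Xpow_bdd_pow (R : realType) (X : set (nat -> R)) nrm (p : R) s :
  maximal_seq_space X nrm -> 0 < p -> X s -> Xpow X p (fun k => `|s k| `^ p).
Proof.
move=> HX p0 Xs; split.
  have [M hM] := ms_bdd HX Xs; exists (M `^ p) => k.
  rewrite (ger0_norm (powR_ge0 _ _)); apply: (pow_le (ltW p0) (normr_ge0 _) (hM k)).
have -> : (fun k => `| `|s k| `^ p | `^ p^-1) = (fun k => `|s k|).
  by apply: funext => k; rewrite (ger0_norm (powR_ge0 _ _)) abs_pow_root.
by have [] := ms_abs HX Xs.
Qed.

Lemma c1_c2 (R : realType) (X : set (nat -> R)) nrm (p c : R) :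
  maximal_seq_space X nrm -> 1 <= p -> pconvex_const X nrm p c ->
  is_normed_seq_space (Xpow X p) (Nc X nrm p) /\ 0 < c /\
  forall s, X s ->
    c^-1 * nrm s <= Nc X nrm p (fun k => `|s k| `^ p) `^ p^-1 /\
    Nc X nrm p (fun k => `|s k| `^ p) `^ p^-1 <= nrm s.
Proof.
move=> HX p1 hc. have p0 : 0 < p by apply: lt_le_trans p1.
have pn0 : p != 0 := lt0r_neq0 p0.
have pi0 : 0 < p^-1 := invr_gt0_lt p0.
have c0 : 0 < c by case: hc.
split; last split => //.
  split; [|split; [|split; [|split; [|split; [|split]]]]].
  - split; first by exists 0 => k; rewrite normr0; exact: lexx.
    have -> : (fun k => `|(fun _ : nat => (0:R)) k| `^ p^-1) = (fun _ => 0).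
      by apply: funext => k; rewrite normr0 (pow0 pi0).
    exact: ms_zero HX.
  - move=> x y [[Mx hMx] hx] [[My hMy] hy]; split.
      exists (Mx + My) => k; apply: le_trans (ler_normD _ _) _; exact: lerD.
    have hb := ms_add HX hx hy.
    have hle : forall k, `| `|x k + y k| `^ p^-1 | <= `| `|x k| `^ p^-1 + `|y k| `^ p^-1 |.
      move=> k; rewrite (ger0_norm (powR_ge0 _ _)) [X in _ <= X]ger0_norm; last exact: addr_ge0 (powR_ge0 _ _) (powR_ge0 _ _).
      apply: le_trans (powR_subadd p1 (normr_ge0 _) (normr_ge0 _)).
      apply: (pow_le (ltW pi0) (normr_ge0 _)); exact: ler_normD.
    by have [] := solid HX hb hle.
  - move=> a x [[Mx hMx] hx]; split.
      exists (`|a| * Mx) => k; rewrite normrM; apply: ler_wpM2l; [exact: normr_ge0 | exact: hMx].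
    have -> : (fun k => `|a * x k| `^ p^-1) = (fun k => `|a| `^ p^-1 * `|x k| `^ p^-1).
      by apply: funext => k; rewrite normrM powRM.
    exact: ms_scal HX _ _ hx.
  - by move=> x hx; apply: Nc_ge0; exact: Xpow_ne.
  - move=> x hx h0; apply: funext => k.
    have h := Nc_lower HX p1 hc (Xpow_ne nrm p0 hx); rewrite h0 in h.
    have [_ Xt] := hx.
    have e : nrm (fun k => `|x k| `^ p^-1) / c = 0.
      apply/eqP; rewrite eq_le; apply/andP; split.
        rewrite -(pow0 p0) in h; apply: (pow_le_inv p0 _ (lexx 0) h).
        exact: divr_ge0 (ms_ge0 HX Xt) (ltW c0).
      exact: divr_ge0 (ms_ge0 HX Xt) (ltW c0).
    have e2 : nrm (fun k => `|x k| `^ p^-1) = 0.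
      by move/eqP: e; rewrite mulf_eq0 invr_eq0 (negbTE (lt0r_neq0 c0)) orbF => /eqP.
    have := ms_eq0 HX Xt e2 => /(congr1 (fun f => f k)) /=.
    by move/powR_eq0_eq0/normr0_eq0.
  - move=> a x hx.
    have [->|an0] := eqVneq a 0.
      have -> : (fun k => 0 * x k) = (fun _ => 0 : R) by apply: funext => k; rewrite mul0r.
      by rewrite Nc0 normr0 mul0r.
    have ap : 0 < `|a| by rewrite normr_gt0.
    rewrite (@Nc_absE _ X nrm p _ (fun k => `|a| * x k)); last by move=> k; rewrite !normrM normr_id.
    have hne := Xpow_ne nrm p0 hx.
    apply/eqP; rewrite eq_le; apply/andP; split; first exact: Nc_scale HX p0 ap hne.
    have hne' : exists r, Dset X nrm p (fun k => `|a| * x k) r.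
      by have [r hr] := hne; exists (`|a| * r); exact: D_scale HX p0 ap hr.
    have := Nc_scale HX p0 (invr_gt0_lt ap) hne'.
    have -> : (fun k => `|a|^-1 * (`|a| * x k)) = x.
      by apply: funext => k; rewrite mulrA (mulVf (lt0r_neq0 ap)) mul1r.
    move=> h; rewrite -(ler_pM2l (invr_gt0_lt ap)) mulrA (mulVf (lt0r_neq0 ap)) mul1r.
    exact: h.
  - move=> x y hx hy; apply: Nc_add; exact: Xpow_ne.
move=> s Xs.
have hD : Dset X nrm p (fun k => `|s k| `^ p) (nrm s `^ p).
  apply: (D_one nrm Xs) => k; rewrite (ger0_norm (powR_ge0 _ _)); exact: lexx.
have hne : exists r, Dset X nrm p (fun k => `|s k| `^ p) r by exists (nrm s `^ p).
have N0 := Nc_ge0 hne.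
have s0 := ms_ge0 HX Xs.
split; last first.
  apply: (pow_le_rt p0 N0 s0); exact: Nc_le hD.
have h := Nc_lower HX p1 hc hne.
have e1 : (fun k => `| `|s k| `^ p | `^ p^-1) = (fun k => `|s k|).
  by apply: funext => k; rewrite (ger0_norm (powR_ge0 _ _)) abs_pow_root.
rewrite e1 in h.
have [_ e] := ms_abs HX Xs; rewrite e in h.
rewrite mulrC -(@powRK _ p (nrm s / c) pn0 (divr_ge0 s0 (ltW c0))).
exact: (pow_le (ltW pi0) (powR_ge0 _ _) h).
Qed.

Lemma np_sum (R : realType) (Z : set (nat -> R)) (np : (nat -> R) -> R) n (f : nat -> nat -> R) :
  is_normed_seq_space Z np -> (forall i, (i < n)%N -> Z (f i)) ->
  Z (fun j => \sum_(i < n) f i j) /\ np (fun j => \sum_(i < n) f i j) <= \sum_(i < n) np (f i).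
Proof.
move=> [h0 [hadd [hsc [hge0 [heq0 [hZ htri]]]]]].
elim: n => [|n IH] hf.
  have -> : (fun j => \sum_(i < 0) f i j) = (fun _ => 0 : R) by apply: funext => j; rewrite big_ord0.
  split => //; rewrite big_ord0.
  have := hZ 0 _ h0.
  have -> : (fun k : nat => (0:R) * 0) = (fun _ => 0) by apply: funext => k; rewrite mul0r.
  by rewrite normr0 mul0r => ->; exact: lexx.
have [IH1 IH2] := IH (fun i hi => hf i (ltnW hi)).
have -> : (fun j => \sum_(i < n.+1) f i j) = (fun j => \sum_(i < n) f i j + f n j)
  by apply: funext => j; rewrite big_ord_recr.
have hfn := hf n (ltnSn n).
split; first exact: hadd.
rewrite big_ord_recr /=; apply: le_trans (htri _ _ IH1 hfn) _.
by apply: lerD => //; exact: lexx.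
Qed.

Lemma c2_c1 (R : realType) (X : set (nat -> R)) nrm (p : R) np (c : R) :
  maximal_seq_space X nrm -> 1 <= p -> is_normed_seq_space (Xpow X p) np -> 0 < c ->
  (forall s, X s ->
        c^-1 * nrm s <= np (fun k => `|s k| `^ p) `^ p^-1 /\
        np (fun k => `|s k| `^ p) `^ p^-1 <= nrm s) ->
  pconvex_const X nrm p c.
Proof.
move=> HX p1 hn c0 hb. have p0 : 0 < p by apply: lt_le_trans p1.
have pn0 : p != 0 := lt0r_neq0 p0.
have pi0 : 0 < p^-1 := invr_gt0_lt p0.
have hge0 : forall x, Xpow X p x -> 0 <= np x by case: hn => _ [_ [_ [h _]]].
split => // n xs hxs.
have Xw := X_w HX p1 hxs.
have [lo _] := hb _ Xw.
pose f i := fun j => `|xs i j| `^ p.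
have hf : forall i, (i < n)%N -> Xpow X p (f i) by move=> i hi; apply: Xpow_bdd_pow; [exact: HX|exact: p0|exact: hxs].
have e : (fun k => `|(fun j => (\sum_(i < n) `|xs i j| `^ p) `^ p^-1) k| `^ p) =
         (fun j => \sum_(i < n) f i j).
  apply: funext => j /=; rewrite (ger0_norm (powR_ge0 _ _)) powRKV //.
  by apply: sumr_ge0 => i _; exact: powR_ge0.
rewrite e in lo.
have [hS hS2] := np_sum hn hf.
have hnpf : forall i, (i < n)%N -> np (f i) <= nrm (xs i) `^ p.
  move=> i hi; have [_ h] := hb _ (hxs i hi).
  exact: (pow_lt_le p0 (hge0 _ (hf i hi)) (ms_ge0 HX (hxs i hi)) h).
have h3 : np (fun j => \sum_(i < n) f i j) `^ p^-1 <= (\sum_(i < n) nrm (xs i) `^ p) `^ p^-1.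
  apply: (pow_le (ltW pi0) (hge0 _ hS)).
  apply: le_trans hS2 _; apply: ler_sum => i _; exact: hnpf i (ltn_ord i).
have := le_trans lo h3.
by rewrite ler_pdivrMl.
Qed.

Lemma c3_c1 (R : realType) (X : set (nat -> R)) nrm (p : R) Y nY (c : R) :
  maximal_seq_space X nrm -> 1 <= p -> maximal_seq_space Y nY -> X = IDL Y nY p -> 0 < c ->
  (forall s, X s -> nrm s <= c * opnorm Y nY p s /\ opnorm Y nY p s <= c * nrm s) ->
  pconvex_const X nrm p (c * c).
Proof.
move=> HX p1 HY eX c0 hb. have p0 : 0 < p by apply: lt_le_trans p1.
have pn0 : p != 0 := lt0r_neq0 p0.
split; first exact: mulr_gt0.
move=> n xs hxs.
have Xw := X_w HX p1 hxs.
have [hw _] := hb _ Xw.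
have hIw : IDL Y nY p (fun j => (\sum_(i < n) `|xs i j| `^ p) `^ p^-1) by rewrite -eX.
set S := \sum_(i < n) nrm (xs i) `^ p.
have S0 : 0 <= S by apply: sumr_ge0 => i _; exact: powR_ge0.
have B0 : 0 <= c * S `^ p^-1 := mulr_ge0 (ltW c0) (powR_ge0 _ _).
have hop : opnorm Y nY p (fun j => (\sum_(i < n) `|xs i j| `^ p) `^ p^-1) <= c * S `^ p^-1.
  apply: (proj2 (Wge HY p0 B0 _)) => t Yt t1 m.
  have tt0 := ms_ge0 HY Yt.
  have e : psum p (fun j => (\sum_(i < n) `|xs i j| `^ p) `^ p^-1) t m =
           \sum_(i < n) psum p (xs i) t m.
    rewrite /psum exchange_big /=; apply: eq_bigr => k _.
    rewrite normrM (powRM _ (normr_ge0 _) (normr_ge0 _)).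
    rewrite (ger0_norm (powR_ge0 _ _)) powRKV //; last by apply: sumr_ge0 => i _; exact: powR_ge0.
    rewrite mulr_suml; apply: eq_bigr => i _.
    by rewrite normrM (powRM _ (normr_ge0 _) (normr_ge0 _)).
  rewrite e.
  apply: (@le_trans _ _ (\sum_(i < n) c `^ p * nrm (xs i) `^ p)).
    apply: ler_sum => i _.
    have hxi : IDL Y nY p (xs i) by rewrite -eX; exact: hxs.
    apply: le_trans (Wle m HY p0 hxi Yt) _.
    rewrite -(powRM _ (ltW c0) (ms_ge0 HX (hxs i (ltn_ord i)))).
    apply: (pow_le (ltW p0) (mulr_ge0 (opnorm_ge0 HY hxi) tt0)).
    apply: le_trans (proj2 (hb _ (hxs i (ltn_ord i)))).
    rewrite -[X in _ <= X]mulr1; apply: ler_wpM2l; [exact: opnorm_ge0 HY hxi | exact: t1].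
  rewrite -mulr_sumr -/S (powRM _ (ltW c0) (powR_ge0 _ _)) (powRKV pn0 S0); exact: lexx.
apply: le_trans hw _; rewrite -mulrA; apply: ler_wpM2l; [exact: ltW c0 | exact: hop].
Qed.

End Prop11Helpers.
Import Prop11Helpers.
Unset Implicit Arguments.

Theorem proposition1p1 (R : realType) (p : R) (X : set (nat -> R))
    (nrm : (nat -> R) -> R) :
  1 <= p -> maximal_seq_space X nrm ->
  let cond1 := pconvex X nrm p in
  let cond2 := exists (np : (nat -> R) -> R) (c : R),
      is_normed_seq_space (Xpow X p) np /\ 0 < c /\
      forall s, X s ->
        c^-1 * nrm s <= np (fun k => `|s k| `^ p) `^ p^-1 /\
        np (fun k => `|s k| `^ p) `^ p^-1 <= nrm s in
  let cond3 := exists (Y : set (nat -> R)) (nY : (nat -> R) -> R),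
      maximal_seq_space Y nY /\ X = IDL Y nY p /\
      exists c : R, 0 < c /\ forall s, X s ->
        nrm s <= c * opnorm Y nY p s /\ opnorm Y nY p s <= c * nrm s in
  (cond1 <-> cond2) /\ (cond1 <-> cond3) /\
  (cond1 ->
     let Y0 := IDL X nrm p in
     let nY0 := opnorm X nrm p in
     maximal_seq_space Y0 nY0 /\ X = IDL Y0 nY0 p /\
     forall s, X s ->
       (Mp X nrm p)^-1 * nrm s <= opnorm Y0 nY0 p s /\
       opnorm Y0 nY0 p s <= nrm s).
Proof.
move=> p1 HX; cbv zeta.
have p0 : 0 < p by apply: lt_le_trans p1.
have HY0 := IDL_max HX p1.
have facts : pconvex X nrm p ->
    X = IDL (IDL X nrm p) (opnorm X nrm p) p /\
    forall s, X s ->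
      nrm s <= Mp X nrm p * opnorm (IDL X nrm p) (opnorm X nrm p) p s /\
      opnorm (IDL X nrm p) (opnorm X nrm p) p s <= nrm s.
  move=> h1; have [c hc] := h1; split.
    apply/seteqP; split => s hs.
      exact: (proj1 (X_sub_IDL0 HX p1 hs)).
    exact: IDL0_sub_X HX p1 hc hs.
  move=> s Xs; have [hs' hup] := X_sub_IDL0 HX p1 Xs; split => //.
  apply: Mp_bound h1 (opnorm_ge0 HY0 hs') _ => c' hc'.
  exact: lower_c HX p1 hc' Xs.
split.
  split.
    by move=> [c hc]; exists (Nc X nrm p), c; exact: c1_c2 HX p1 hc.
  by move=> [np [c [hn [c0 hb]]]]; exists c; exact: c2_c1 HX p1 hn c0 hb.
split.
  split.
    move=> h1; have [eX hb] := facts h1.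
    have M1 := Mp_ge1 HX p1 h1.
    have M0 : 0 < Mp X nrm p by apply: lt_le_trans M1.
    exists (IDL X nrm p), (opnorm X nrm p); split => //; split => //.
    exists (Mp X nrm p); split => // s Xs; have [b1 b2] := hb s Xs; split => //.
    apply: le_trans b2 _; rewrite -[X in X <= _]mul1r.
    by apply: ler_wpM2r; [exact: (ms_ge0 HX Xs) | exact: M1].
  by move=> [Y [nY [HY [eX [c [c0 hb]]]]]]; exists (c * c); exact: c3_c1 HX p1 HY eX c0 hb.
move=> h1; have [eX hb] := facts h1.
have M0 : 0 < Mp X nrm p by apply: lt_le_trans (Mp_ge1 HX p1 h1).
split => //; split => // s Xs; have [b1 b2] := hb s Xs; split => //.
by rewrite ler_pdivrMl.
Qed.
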